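(* In the setting described in the context, there is $M>0$ independent of $\epsilon\in(0,1)$ such that for all $(x,y)\in\mathbb{R}^2$ and $t\ge0$, $$|\rho^\epsilon(x,y,t)|\le\frac{M}{\epsilon^{2\alpha}},\qquad \Big|\frac{\partial\rho^\epsilon}{\partial x}(x,y,t)\Big|,\ \Big|\frac{\partial\rho^\epsilon}{\partial y}(x,y,t)\Big|\le\frac{M}{\epsilon^{3\alpha}}.$$
   Context: Let $\mathcal{C}_b(\mathbb{R}^2)$ be the Banach space of bounded continuous real functions on $\mathbb{R}^2$ with sup norm; for real $u$, $u^+=\max(0,u)$, $u^-=\max(0,-u)$. For $0<\epsilon<1$ let $u^\epsilon,v^\epsilon:\mathbb{R}^2\times[0,\infty)\to\mathbb{R}$ be $2\pi$-periodic in $x$ and in $y$, with $t\mapsto u^\epsilon(\cdot,\cdot,t),v^\epsilon(\cdot,\cdot,t)$ continuous into $\mathcal{C}_b(\mathbb{R}^2)$ and bounded uniformly in $\epsilon,x,y,t$. Let $\rho_0^\epsilon\in\mathcal{C}_b(\mathbb{R}^2)$ be $2\pi$-periodic in each variable with $\sup_\epsilon\int_{[-\pi,\pi]^2}|\rho_0^\epsilon|<\infty$. Let $X^\epsilon$ be the global $\mathcal{C}^1$ solution $[0,\infty)\to\mathcal{C}_b(\mathbb{R}^2)$ of $X^\epsilon(x,y,0)=\rho_0^\epsilon(x,y)$ and $$\frac{d}{dt}X^\epsilon(x,y,t)=\frac1\epsilon\big[(X^\epsilon u^{\epsilon+})(x-\epsilon,y,t)-(X^\epsilon|u^\epsilon|)(x,y,t)+(X^\epsilon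 u^{\epsilon-})(x+\epsilon,y,t)+(X^\epsilon v^{\epsilon+})(x,y-\epsilon,t)-(X^\epsilon|v^\epsilon|)(x,y,t)+(X^\epsilon v^{\epsilon-})(x,y+\epsilon,t)\big].$$ Let $\phi\in\mathcal{C}^\infty(\mathbb{R}^2)$ have compact support with $\int\phi=1$, $\alpha\in]0,1]$, $\phi_{\epsilon^\alpha}(x,y)=\epsilon^{-2\alpha}\phi(x/\epsilon^\alpha,y/\epsilon^\alpha)$, and $\rho^\epsilon(x,y,t)=(X^\epsilon(\cdot,\cdot,t)*\phi_{\epsilon^\alpha})(x,y)$. *)

(* Defs.v *)
From Stdlib Require Import Reals Lra.
From Coquelicot Require Import Coquelicot.
Open Scope R_scope.

Definition cont2 (f : R -> R -> R) : Prop :=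
  forall x y, continuous (fun p : R * R => f (fst p) (snd p)) (x, y).

Definition Cb (f : R -> R -> R) : Prop :=
  cont2 f /\ exists B, forall x y, Rabs (f x y) <= B.

Definition periodic2 (f : R -> R -> R) : Prop :=
  forall x y, f (x + 2 * PI) y = f x y /\ f x (y + 2 * PI) = f x y.

(* t |-> F(.,.,t) is continuous [0,oo) -> C_b(R^2) (sup norm) *)
Definition cont_Cb (F : R -> R -> R -> R) : Prop :=
  (forall t, 0 <= t -> Cb (fun x y => F x y t)) /\
  forall t, 0 <= t -> forall e, 0 < e -> exists d, 0 < d /\
    forall s, 0 <= s -> Rabs (s - t) < d ->
      forall x y, Rabs (F x y s - F x y t) <= e.

(* D(.,.,t) is the derivative at t of t |-> F(.,.,t) in C_b(R^2) (sup norm),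
   one-sided at t = 0 *)
Definition has_Cb_deriv (F D : R -> R -> R -> R) (t : R) : Prop :=
  forall e, 0 < e -> exists d, 0 < d /\
    forall h, h <> 0 -> 0 <= t + h -> Rabs h < d ->
      forall x y, Rabs ((F x y (t + h) - F x y t) / h - D x y t) <= e.

Definition pos (a : R) : R := Rmax 0 a.
Definition neg (a : R) : R := Rmax 0 (- a).

Definition rhs (eps : R) (u v X : R -> R -> R -> R) (x y t : R) : R :=
  / eps * ( X (x - eps) y t * pos (u (x - eps) y t)
          - X x y t * Rabs (u x y t)
          + X (x + eps) y t * neg (u (x + eps) y t)
          + X x (y - eps) t * pos (v x (y - eps) t)
          - X x y t * Rabs (v x y t)
          + X x (y + eps) t * neg (v x (y + eps) t)).

Definition is_C1_solution (eps : R) (u v X : R -> R -> R -> R)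
    (r0 : R -> R -> R) : Prop :=
  cont_Cb X /\
  (forall x y, X x y 0 = r0 x y) /\
  (forall t, 0 <= t -> has_Cb_deriv X (rhs eps u v X) t) /\
  cont_Cb (rhs eps u v X).

Definition dx (f : R -> R -> R) : R -> R -> R :=
  fun x y => Derive (fun x' => f x' y) x.
Definition dy (f : R -> R -> R) : R -> R -> R :=
  fun x y => Derive (fun y' => f x y') y.

Fixpoint Ck (k : nat) (f : R -> R -> R) : Prop :=
  match k with
  | O => cont2 f
  | S k' => cont2 f /\
      (forall x y, ex_derive (fun x' => f x' y) x) /\
      (forall x y, ex_derive (fun y' => f x y') y) /\
      Ck k' (dx f) /\ Ck k' (dy f)
  end.

Definition smooth2 (f : R -> R -> R) : Prop := forall k, Ck k f.

Definition compact_support2 (f : R -> R -> R) : Prop :=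
  exists K, forall a b, K < Rabs a \/ K < Rabs b -> f a b = 0.

Definition int_R2 (f : R -> R -> R) : R :=
  RInt_gen (fun a => RInt_gen (fun b => f a b)
                       (Rbar_locally m_infty) (Rbar_locally p_infty))
           (Rbar_locally m_infty) (Rbar_locally p_infty).

Definition int_cell (f : R -> R -> R) : R :=
  RInt (fun a => RInt (fun b => f a b) (- PI) PI) (- PI) PI.

Definition moll (phi : R -> R -> R) (delta : R) : R -> R -> R :=
  fun a b => / (delta ^ 2) * phi (a / delta) (b / delta).

Definition conv2 (f g : R -> R -> R) (x y : R) : R :=
  int_R2 (fun a b => f (x - a) (y - b) * g a b).

Definition rho (X : R -> R -> R -> R -> R) (phi : R -> R -> R) (alpha : R)
    (eps x y t : R) : R :=
  conv2 (fun a b => X eps a b t) (moll phi (Rpower eps alpha)) x y.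

(* Main.v *)
Require Import Defs.
From Stdlib Require Import Reals Lra Lia ZArith Classical ClassicalEpsilon FunctionalExtensionality.
From Coquelicot Require Import Coquelicot.
Open Scope R_scope.

Lemma cont_of_eps (f : R -> R) (x : R) :
  (forall e, 0 < e -> exists d, 0 < d /\ forall y, Rabs (y - x) < d -> Rabs (f y - f x) < e) ->
  continuous f x.
Proof.
  intros H. apply continuity_pt_filterlim.
  intros e He. destruct (H e He) as [d [Hd H']].
  exists d; split; auto. intros y [_ Hy]. apply H'. exact Hy.
Qed.

Lemma eps_of_cont (f : R -> R) (x : R) : continuous f x ->
  forall e, 0 < e -> exists d, 0 < d /\ forall y, Rabs (y - x) < d -> Rabs (f y - f x) < e.
Proof.
  intros H%continuity_pt_filterlim e He.
  destruct (H e He) as [d [Hd H']]. exists d; split; auto.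
  intros y Hy. destruct (Req_dec y x) as [->|].
  - rewrite Rminus_diag, Rabs_R0; auto.
  - apply H'. split; [split; auto|exact Hy]. exact I.
Qed.

Lemma cont2_2d (f : R -> R -> R) x y : cont2 f -> continuity_2d_pt f x y.
Proof. intros H. apply continuity_2d_pt_filterlim. apply H. Qed.

Lemma cont2_const c : cont2 (fun _ _ => c).
Proof. intros x y. apply continuous_const. Qed.

Lemma cont2_fst : cont2 (fun a _ => a).
Proof. intros x y. apply continuous_fst. Qed.

Lemma cont2_snd : cont2 (fun _ b => b).
Proof. intros x y. apply continuous_snd. Qed.

Lemma cont2_comp (f g1 g2 : R -> R -> R) : cont2 f -> cont2 g1 -> cont2 g2 ->
  cont2 (fun a b => f (g1 a b) (g2 a b)).
Proof.
  intros Hf H1 H2 x y.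
  apply (continuous_comp_2 (fun p : R * R => g1 (fst p) (snd p))
                            (fun p : R * R => g2 (fst p) (snd p)) f).
  - apply H1.
  - apply H2.
  - apply Hf.
Qed.

Lemma cont2_comp1 (g : R -> R) (f : R -> R -> R) : (forall z, continuous g z) -> cont2 f ->
  cont2 (fun a b => g (f a b)).
Proof.
  intros Hg Hf x y.
  apply (continuous_comp (fun p : R * R => f (fst p) (snd p)) g). apply Hf. apply Hg.
Qed.

Lemma cont2_plus f g : cont2 f -> cont2 g -> cont2 (fun a b => f a b + g a b).
Proof.
  intros Hf Hg x y. apply (continuous_plus (fun p : R * R => f (fst p) (snd p))
     (fun p : R * R => g (fst p) (snd p))); auto.
Qed.

Lemma cont2_opp f : cont2 f -> cont2 (fun a b => - f a b).
Proof.
  intros Hf x y. apply (continuous_opp (fun p : R * R => f (fst p) (snd p))); auto.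
Qed.

Lemma cont2_minus f g : cont2 f -> cont2 g -> cont2 (fun a b => f a b - g a b).
Proof. intros. apply cont2_plus; auto. apply cont2_opp; auto. Qed.

Lemma cont2_mult f g : cont2 f -> cont2 g -> cont2 (fun a b => f a b * g a b).
Proof.
  intros Hf Hg x y. apply (continuous_mult (fun p : R * R => f (fst p) (snd p))
     (fun p : R * R => g (fst p) (snd p))); auto.
Qed.

Lemma cont2_abs f : cont2 f -> cont2 (fun a b => Rabs (f a b)).
Proof. intros. apply cont2_comp1; auto. apply continuous_Rabs. Qed.

Lemma cont2_shift f c d : cont2 f -> cont2 (fun a b => f (a + c) (b + d)).
Proof.
  intros H. apply (cont2_comp f (fun a _ => a + c) (fun _ b => b + d)); auto.
  apply cont2_plus; [apply cont2_fst|apply cont2_const].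
  apply cont2_plus; [apply cont2_snd|apply cont2_const].
Qed.

Lemma cont2_x f b : cont2 f -> forall a, continuous (fun a => f a b) a.
Proof.
  intros H a. apply cont_of_eps. intros e He.
  destruct (cont2_2d f a b H (mkposreal e He)) as [d Hd].
  exists d; split; [apply cond_pos|]. intros y Hy. apply Hd; auto.
  rewrite Rminus_diag, Rabs_R0; apply cond_pos.
Qed.

Lemma cont2_y f a : cont2 f -> forall b, continuous (fun b => f a b) b.
Proof.
  intros H b. apply cont_of_eps. intros e He.
  destruct (cont2_2d f a b H (mkposreal e He)) as [d Hd].
  exists d; split; [apply cond_pos|]. intros y Hy. apply Hd; auto.
  rewrite Rminus_diag, Rabs_R0; apply cond_pos.
Qed.

Lemma cont_pos z : continuous Defs.pos z.
Proof.
  unfold Defs.pos. apply cont_of_eps. intros e He. exists e; split; auto. intros y Hy.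
  unfold Rmax; repeat destruct Rle_dec; unfold Rabs in *; repeat destruct Rcase_abs; lra.
Qed.

Lemma cont_neg z : continuous Defs.neg z.
Proof.
  unfold Defs.neg. apply cont_of_eps. intros e He. exists e; split; auto. intros y Hy.
  unfold Rmax; repeat destruct Rle_dec; unfold Rabs in *; repeat destruct Rcase_abs; lra.
Qed.

Lemma pos_bounds a : 0 <= Defs.pos a <= Rabs a.
Proof. unfold Defs.pos, Rmax, Rabs; destruct Rle_dec, Rcase_abs; lra. Qed.
Lemma neg_bounds a : 0 <= Defs.neg a <= Rabs a.
Proof. unfold Defs.neg, Rmax, Rabs; destruct Rle_dec, Rcase_abs; lra. Qed.
Lemma pos_neg a : Rabs a = Defs.pos a + Defs.neg a.
Proof. unfold Defs.pos, Defs.neg, Rmax, Rabs; repeat destruct Rle_dec; destruct Rcase_abs; lra. Qed.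

Lemma RInt_minus_R (f g : R -> R) a b : ex_RInt f a b -> ex_RInt g a b ->
  RInt (fun x => f x - g x) a b = RInt f a b - RInt g a b.
Proof. intros. apply (RInt_minus f g); auto. Qed.

Lemma RInt_plus_R (f g : R -> R) a b : ex_RInt f a b -> ex_RInt g a b ->
  RInt (fun x => f x + g x) a b = RInt f a b + RInt g a b.
Proof. intros. apply (RInt_plus f g); auto. Qed.

Lemma RInt_scal_R (f : R -> R) a b k : ex_RInt f a b ->
  RInt (fun x => k * f x) a b = k * RInt f a b.
Proof. intros. apply (RInt_scal f); auto. Qed.

Lemma ex_RInt_minus_R (f g : R -> R) a b : ex_RInt f a b -> ex_RInt g a b ->
  ex_RInt (fun x => f x - g x) a b.
Proof. intros. apply (ex_RInt_minus f g); auto. Qed.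

Lemma ex_RInt_plus_R (f g : R -> R) a b : ex_RInt f a b -> ex_RInt g a b ->
  ex_RInt (fun x => f x + g x) a b.
Proof. intros. apply (ex_RInt_plus f g); auto. Qed.

Lemma ex_RInt_scal_R (f : R -> R) a b k : ex_RInt f a b ->
  ex_RInt (fun x => k * f x) a b.
Proof. intros. apply (ex_RInt_scal f); auto. Qed.

Lemma RInt_swap_R (f : R -> R) a b : ex_RInt f a b -> RInt f b a = - RInt f a b.
Proof. intros H. rewrite <- (opp_RInt_swap f a b H). reflexivity. Qed.

Lemma RInt_Chasles_R (f : R -> R) a b c : ex_RInt f a b -> ex_RInt f b c ->
  RInt f a b + RInt f b c = RInt f a c.
Proof. intros. apply (RInt_Chasles f); auto. Qed.

Lemma RInt_abs_bound (g : R -> R) p q M : ex_RInt g p q ->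
  (forall z, Rmin p q <= z <= Rmax p q -> Rabs (g z) <= M) ->
  Rabs (RInt g p q) <= Rabs (q - p) * M.
Proof.
  intros Hex Hb. destruct (Rle_dec p q) as [Hpq|Hpq].
  - rewrite (Rabs_right (q - p)) by lra. apply abs_RInt_le_const; auto.
    intros t Ht. apply Hb. rewrite Rmin_left, Rmax_right; lra.
  - rewrite RInt_swap_R, Rabs_Ropp by (apply ex_RInt_swap; auto).
    rewrite (Rabs_left (q - p)) by lra.
    replace (- (q - p)) with (p - q) by ring.
    apply abs_RInt_le_const; [lra|apply ex_RInt_swap; auto|].
    intros t Ht. apply Hb. rewrite Rmin_right, Rmax_left; lra.
Qed.

Lemma ex_RInt_cont_R (f : R -> R) a b :
  (forall z, Rmin a b <= z <= Rmax a b -> continuous f z) -> ex_RInt f a b.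
Proof. intros H. apply (ex_RInt_continuous (V:=R_CompleteNormedModule)); auto. Qed.

Lemma ex_RInt_y F a p q : cont2 F -> ex_RInt (fun b => F a b) p q.
Proof. intros H. apply ex_RInt_cont_R. intros z _. apply cont2_y; auto. Qed.

Lemma ex_RInt_x F b p q : cont2 F -> ex_RInt (fun a => F a b) p q.
Proof. intros H. apply ex_RInt_cont_R. intros z _. apply cont2_x; auto. Qed.

Lemma param_cont F p q a0 : cont2 F ->
  continuous (fun a => RInt (fun b => F a b) p q) a0.
Proof.
  intros H. apply cont_of_eps. intros e He.
  set (e' := e / (2 * (Rabs (q - p) + 1))).
  assert (He' : 0 < e') by (unfold e'; apply Rdiv_lt_0_compat; [lra|]; pose proof (Rabs_pos (q-p)); lra).
  destruct (uniform_continuity_2d F (a0 - 1) (a0 + 1) (Rmin p q) (Rmax p q))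
    with (eps := mkposreal e' He') as [d Hd].
  { intros. apply cont2_2d; auto. }
  exists (Rmin d 1). split. { apply Rmin_pos; [apply cond_pos|lra]. }
  intros y Hy.
  rewrite <- RInt_minus_R by (apply ex_RInt_y; auto).
  eapply Rle_lt_trans. apply (RInt_abs_bound _ _ _ e').
  { apply ex_RInt_minus_R; apply ex_RInt_y; auto. }
  { intros z Hz. left. simpl in Hd.
    assert (H1 : Rabs (y - a0) < d) by (eapply Rlt_le_trans; [exact Hy|apply Rmin_l]).
    assert (H2 : Rabs (y - a0) < 1) by (eapply Rlt_le_trans; [exact Hy|apply Rmin_r]).
    apply Rabs_lt_between' in H2.
    apply Hd; try lra.
    rewrite Rminus_diag, Rabs_R0. apply cond_pos. }
  unfold e'. pose proof (Rabs_pos (q-p)).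
  apply Rle_lt_trans with (e * (Rabs (q - p) / (2 * (Rabs (q - p) + 1)))).
  { right. field. lra. }
  rewrite <- (Rmult_1_r e) at 2. apply Rmult_lt_compat_l; auto.
  apply Rmult_lt_reg_r with (2 * (Rabs (q - p) + 1)). lra.
  field_simplify; lra.
Qed.

Lemma ex_RInt_outer F p q r s : cont2 F ->
  ex_RInt (fun a => RInt (fun b => F a b) p q) r s.
Proof. intros H. apply ex_RInt_cont_R. intros z _. apply param_cont; auto. Qed.

Definition dint (F : R -> R -> R) a1 a2 b1 b2 :=
  RInt (fun a => RInt (fun b => F a b) b1 b2) a1 a2.

Lemma dint_minus F G a1 a2 b1 b2 : cont2 F -> cont2 G ->
  dint (fun a b => F a b - G a b) a1 a2 b1 b2 = dint F a1 a2 b1 b2 - dint G a1 a2 b1 b2.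
Proof.
  intros HF HG. unfold dint. rewrite <- RInt_minus_R by (apply ex_RInt_outer; auto).
  apply RInt_ext. intros. apply RInt_minus_R; apply ex_RInt_y; auto.
Qed.

Lemma dint_plus F G a1 a2 b1 b2 : cont2 F -> cont2 G ->
  dint (fun a b => F a b + G a b) a1 a2 b1 b2 = dint F a1 a2 b1 b2 + dint G a1 a2 b1 b2.
Proof.
  intros HF HG. unfold dint. rewrite <- RInt_plus_R by (apply ex_RInt_outer; auto).
  apply RInt_ext. intros. apply RInt_plus_R; apply ex_RInt_y; auto.
Qed.

Lemma dint_scal F k a1 a2 b1 b2 : cont2 F ->
  dint (fun a b => k * F a b) a1 a2 b1 b2 = k * dint F a1 a2 b1 b2.
Proof.
  intros HF. unfold dint. rewrite <- RInt_scal_R by (apply ex_RInt_outer; auto).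
  apply RInt_ext. intros. apply RInt_scal_R; apply ex_RInt_y; auto.
Qed.

Lemma dint_le F G a1 a2 b1 b2 : cont2 F -> cont2 G -> a1 <= a2 -> b1 <= b2 ->
  (forall a b, a1 <= a <= a2 -> b1 <= b <= b2 -> F a b <= G a b) ->
  dint F a1 a2 b1 b2 <= dint G a1 a2 b1 b2.
Proof.
  intros HF HG Ha Hb H. unfold dint. apply RInt_le; auto; try (apply ex_RInt_outer; auto).
  intros a Ha'. apply RInt_le; auto; try (apply ex_RInt_y; auto).
  intros b Hb'. apply H; lra.
Qed.

Lemma dint_abs_bound F a1 a2 b1 b2 M : cont2 F -> a1 <= a2 -> b1 <= b2 ->
  (forall a b, a1 <= a <= a2 -> b1 <= b <= b2 -> Rabs (F a b) <= M) ->
  Rabs (dint F a1 a2 b1 b2) <= (a2 - a1) * ((b2 - b1) * M).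
Proof.
  intros HF Ha Hb H. unfold dint.
  replace (a2 - a1) with (Rabs (a2 - a1)) by (apply Rabs_right; lra).
  apply RInt_abs_bound. apply ex_RInt_outer; auto.
  intros a Ha'. replace (b2 - b1) with (Rabs (b2 - b1)) by (apply Rabs_right; lra).
  apply RInt_abs_bound. apply ex_RInt_y; auto.
  intros b Hb'. rewrite Rmin_left, Rmax_right in Ha', Hb' by lra. apply H; lra.
Qed.

Lemma dint_abs F a1 a2 b1 b2 : cont2 F -> a1 <= a2 -> b1 <= b2 ->
  Rabs (dint F a1 a2 b1 b2) <= dint (fun a b => Rabs (F a b)) a1 a2 b1 b2.
Proof.
  intros HF Ha Hb. unfold dint.
  eapply Rle_trans. apply abs_RInt_le; auto. apply ex_RInt_outer; auto.
  apply RInt_le; auto.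
  - apply ex_RInt_cont_R. intros. apply continuous_Rabs_comp. apply param_cont; auto.
  - apply ex_RInt_outer. apply cont2_abs; auto.
  - intros a _. apply abs_RInt_le; auto. apply ex_RInt_y; auto.
Qed.

Lemma mvt_le (f df : R -> R) a b K : a < b ->
  (forall t, a < t < b -> is_derive f t (df t)) ->
  (forall t, a <= t <= b -> forall e, 0 < e -> exists d, 0 < d /\
     forall s, a <= s <= b -> Rabs (s - t) < d -> Rabs (f s - f t) < e) ->
  (forall t, a < t < b -> df t <= K) -> f b - f a <= K * (b - a).
Proof.
  intros Hab Hd Hc HK.
  set (c := fun s => Rmax a (Rmin b s)).
  assert (Hc1 : forall s, a <= c s <= b).
  { intros s; unfold c, Rmax, Rmin; repeat destruct Rle_dec; lra. }
  assert (Hc2 : forall s, a <= s <= b -> c s = s).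
  { intros s Hs; unfold c, Rmax, Rmin; repeat destruct Rle_dec; lra. }
  assert (Hc3 : forall s t, Rabs (c s - c t) <= Rabs (s - t)).
  { intros s t; unfold c, Rmax, Rmin, Rabs; repeat destruct Rle_dec; repeat destruct Rcase_abs; lra. }
  set (g := fun s => f (c s)).
  set (df' := fun t => if Rle_dec (df t) K then df t else K).
  destruct (MVT_gen g a b df') as [x [Hx Heq]].
  - intros t Ht. rewrite Rmin_left, Rmax_right in Ht by lra.
    unfold df'. destruct Rle_dec as [_|Hn]; [|exfalso; apply Hn; apply HK; auto].
    apply is_derive_ext_loc with f; [|apply Hd; auto].
    assert (Hr : 0 < Rmin (t - a) (b - t)) by (apply Rmin_pos; lra).
    exists (mkposreal _ Hr). intros s Hs. unfold g. rewrite Hc2; auto.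
    change (Rabs (s - t) < Rmin (t - a) (b - t)) in Hs.
    pose proof (Rmin_l (t-a) (b-t)); pose proof (Rmin_r (t-a) (b-t)).
    unfold Rabs in Hs; destruct Rcase_abs in Hs; lra.
  - intros t Ht. rewrite Rmin_left, Rmax_right in Ht by lra.
    apply continuity_pt_filterlim. apply cont_of_eps. intros e He.
    destruct (Hc t Ht e He) as [d [Hdp Hd']]. exists d; split; auto.
    intros y Hy. unfold g. rewrite (Hc2 t Ht).
    apply Hd'; [apply Hc1|].
    assert (Hc3' := Hc3 y t). rewrite (Hc2 t Ht) in Hc3'. lra.
  - unfold g in Heq. rewrite !Hc2 in Heq by lra. rewrite Heq.
    rewrite Rmin_left, Rmax_right in Hx by lra.
    apply Rmult_le_compat_r; [lra|]. unfold df'. destruct Rle_dec; lra.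
Qed.

Lemma mvt_abs (f df : R -> R) a b K : a < b ->
  (forall t, a < t < b -> is_derive f t (df t)) ->
  (forall t, a <= t <= b -> forall e, 0 < e -> exists d, 0 < d /\
     forall s, a <= s <= b -> Rabs (s - t) < d -> Rabs (f s - f t) < e) ->
  (forall t, a < t < b -> Rabs (df t) <= K) -> Rabs (f b - f a) <= K * (b - a).
Proof.
  intros Hab Hd Hc HK. apply Rabs_le. split.
  - assert (H := mvt_le (fun s => - f s) (fun t => - df t) a b K Hab).
    enough (- f b - - f a <= K * (b - a)) by lra.
    apply H.
    + intros t Ht. apply (is_derive_opp f). auto.
    + intros t Ht e He. destruct (Hc t Ht e He) as [d [Hd1 Hd2]]. exists d; split; auto.
      intros s Hs Hst. replace (- f s - - f t) with (- (f s - f t)) by ring.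
      rewrite Rabs_Ropp. auto.
    + intros t Ht. specialize (HK t Ht). apply Rabs_le_between in HK. lra.
  - apply mvt_le with df; auto. intros t Ht. specialize (HK t Ht).
    apply Rabs_le_between in HK. lra.
Qed.

Lemma pw_deriv F D t x y : 0 < t -> has_Cb_deriv F D t ->
  is_derive (fun s => F x y s) t (D x y t).
Proof.
  intros Ht H. apply is_derive_Reals. intros e He.
  destruct (H (e/2)) as [d [Hd H']]; [lra|].
  assert (Hm : 0 < Rmin d t) by (apply Rmin_pos; lra).
  exists (mkposreal _ Hm). intros h Hh Hhd. simpl in Hhd.
  eapply Rle_lt_trans. apply H'; auto.
  - pose proof (Rmin_r d t). apply Rabs_lt_between in Hhd. lra.
  - pose proof (Rmin_l d t). lra.
  - lra.
Qed.

Lemma gen_eq (f : R -> R) y e W R0 : (forall z, continuous f z) -> 0 <= R0 ->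
  (forall z, R0 < Rabs z -> f z = 0) -> e - W <= y - R0 -> y + R0 <= e + W ->
  RInt_gen f (Rbar_locally m_infty) (Rbar_locally p_infty) =
  RInt (fun z => f (y - z)) (e - W) (e + W).
Proof.
  intros Hc HR Hz H1 H2.
  set (L := y - (e + W)). set (U := y - (e - W)).
  assert (Hex : forall p q, ex_RInt f p q) by (intros; apply ex_RInt_cont_R; auto).
  assert (Hzero : forall p q, (forall z, Rmin p q < z < Rmax p q -> R0 < Rabs z) -> RInt f p q = 0).
  { intros p q Hpq. rewrite (RInt_ext f (fun _ => 0)).
    - rewrite RInt_const. unfold scal; simpl. unfold mult; simpl. ring.
    - intros z Hz'. apply Hz. apply Hpq. auto. }
  assert (Hrhs : RInt (fun z => f (y - z)) (e - W) (e + W) = RInt f L U).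
  { assert (Hex2 : ex_RInt (fun z => f (-1 * z + y)) (e - W) (e + W)).
    { apply ex_RInt_cont_R. intros z _.
      apply (continuous_comp (fun z => -1 * z + y) f); [|apply Hc].
      apply cont_of_eps. intros e0 He0. exists e0; split; auto. intros w Hw.
      replace (-1 * w + y - (-1 * z + y)) with (- (w - z)) by ring. rewrite Rabs_Ropp; auto. }
    pose proof (RInt_comp_lin f (-1) y (e - W) (e + W)) as Hl.
    rewrite (RInt_ext (fun z => f (y - z)) (fun z => f (-1 * z + y))) by (intros; f_equal; ring).
    assert (Hl' : RInt (fun z => -1 * f (-1 * z + y)) (e - W) (e + W) = RInt f U L).
    { unfold U, L. replace (y - (e - W)) with (-1 * (e - W) + y) by ring.
      replace (y - (e + W)) with (-1 * (e + W) + y) by ring. apply Hl.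
      apply Hex. }
    rewrite RInt_scal_R in Hl' by auto. rewrite (RInt_swap_R f) in Hl' by apply Hex. lra. }
  rewrite Hrhs. apply is_RInt_gen_unique.
  intros P [eps HP]. exists (fun a => a < L) (fun b => U < b).
  - exists L. auto.
  - exists U. auto.
  - intros a b Ha Hb. exists (RInt f L U). split.
    + simpl. replace (RInt f L U) with (RInt f a b).
      * apply RInt_correct. apply Hex.
      * rewrite <- (RInt_Chasles_R f a L b) by auto.
        rewrite <- (RInt_Chasles_R f L U b) by auto.
        assert (Z1 : RInt f a L = 0).
        { apply Hzero. intros z Hz'. rewrite Rmin_left, Rmax_right in Hz' by lra. unfold Rabs; destruct Rcase_abs; unfold L, U in *; lra. }
        assert (Z2 : RInt f U b = 0).
        { apply Hzero. intros z Hz'. rewrite Rmin_left, Rmax_right in Hz' by lra. unfold Rabs; destruct Rcase_abs; unfold L, U in *; lra. }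
        rewrite Z1, Z2, Rplus_0_l, Rplus_0_r. reflexivity.
    + apply HP. apply ball_center.
Qed.

Lemma small_zero a : (forall e, 0 < e -> Rabs a <= e) -> a = 0.
Proof.
  intros H. destruct (Req_dec a 0) as [|Hn]; auto. exfalso.
  assert (Hp : 0 < Rabs a) by (apply Rabs_pos_lt; auto).
  specialize (H (Rabs a / 2) ltac:(lra)). lra.
Qed.

Lemma half_pow_zero a : (forall n, Rabs a <= (1/2) ^ n) -> a = 0.
Proof.
  intros H. apply small_zero. intros e He.
  destruct (pow_lt_1_zero (1/2)) with e as [N HN]; auto.
  { rewrite Rabs_right; lra. }
  specialize (HN N (le_n N)). rewrite Rabs_right in HN.
  - specialize (H N). lra.
  - apply Rle_ge. apply pow_le. lra.
Qed.

Section Uniq.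
Variables (Z D : R -> R -> R -> R) (L : R).
Hypothesis HL : 0 <= L.
Hypothesis Hcont : forall t, 0 <= t -> forall e, 0 < e -> exists d, 0 < d /\
  forall s, 0 <= s -> Rabs (s - t) < d -> forall x y, Rabs (Z x y s - Z x y t) <= e.
Hypothesis H0 : forall x y, Z x y 0 = 0.
Hypothesis Hder : forall t, 0 < t -> forall x y, is_derive (fun s => Z x y s) t (D x y t).
Hypothesis HD : forall t m, 0 <= t -> (forall x y, Rabs (Z x y t) <= m) ->
  forall x y, Rabs (D x y t) <= L * m.

Lemma local_zero T : 0 <= T -> (forall x y, Z x y T = 0) ->
  exists h, 0 < h /\ forall s, T <= s <= T + h -> forall x y, Z x y s = 0.
Proof.
  intros HT HZ. destruct (Hcont T HT 1 ltac:(lra)) as [d [Hd Hd']].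
  set (h := Rmin (d / 2) (1 / (2 * L + 2))).
  assert (Hh : 0 < h) by (unfold h; apply Rmin_pos; [lra|apply Rdiv_lt_0_compat; lra]).
  assert (Hh1 : h <= d / 2) by apply Rmin_l.
  assert (Hh2 : L * h <= 1/2).
  { apply Rle_trans with (L * (1 / (2 * L + 2))).
    - apply Rmult_le_compat_l; auto. apply Rmin_r.
    - apply Rmult_le_reg_r with (2 * L + 2). lra. field_simplify; lra. }
  exists h; split; auto.
  assert (Hn : forall n, forall s, T <= s <= T + h -> forall x y, Rabs (Z x y s) <= (1/2) ^ n).
  { induction n as [|n IH]; intros s Hs x y.
    - simpl. rewrite <- (Rminus_0_r (Z x y s)). rewrite <- (HZ x y).
      apply Hd'; [lra|]. rewrite Rabs_right; lra.
    - destruct (Req_dec s T) as [->|Hne].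
      { rewrite HZ, Rabs_R0. apply pow_le. lra. }
      rewrite <- (Rminus_0_r (Z x y s)). rewrite <- (HZ x y).
      eapply Rle_trans.
      + apply (mvt_abs (fun r => Z x y r) (fun r => D x y r) T s (L * (1/2)^n)); [lra| | |].
        * intros r Hr. apply Hder. lra.
        * intros r Hr e He. destruct (Hcont r ltac:(lra) (e/2) ltac:(lra)) as [d' [Hd1 Hd2]].
          exists d'; split; auto. intros s' Hs' Hs'd. eapply Rle_lt_trans.
          apply Hd2; auto; lra. lra.
        * intros r Hr. apply HD; [lra|]. intros; apply IH; lra.
      + simpl. assert (0 <= (1/2)^n) by (apply pow_le; lra).
        apply Rle_trans with ((L * h) * (1/2)^n).
        * replace (L * (1 / 2) ^ n * (s - T)) with ((L * (s - T)) * (1/2)^n) by ring.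
          apply Rmult_le_compat_r; auto. apply Rmult_le_compat_l; auto; lra.
        * apply Rmult_le_compat_r; auto. }
  intros s Hs x y. apply half_pow_zero. intros n. apply Hn; auto.
Qed.

Lemma unique0 : forall t, 0 <= t -> forall x y, Z x y t = 0.
Proof.
  intros t0 Ht0 x0 y0. destruct (Req_dec (Z x0 y0 t0) 0) as [|Hne]; auto. exfalso.
  set (E := fun r => 0 <= r /\ forall s, 0 <= s <= r -> forall x y, Z x y s = 0).
  assert (HEb : bound E).
  { exists t0. intros r [Hr Hr']. destruct (Rle_dec r t0); auto.
    exfalso. apply Hne. apply Hr'. lra. }
  assert (HE0 : exists r, E r).
  { exists 0. split; [lra|]. intros s Hs x y. replace s with 0 by lra. auto. }
  destruct (completeness E HEb HE0) as [T [HTub HTl]].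
  assert (HT0 : 0 <= T) by (apply HTub; destruct HE0 as [r Hr]; split; [lra|]; intros s Hs x y; replace s with 0 by lra; auto).
  assert (Hbelow : forall s, 0 <= s < T -> forall x y, Z x y s = 0).
  { intros s Hs x y. destruct (classic (exists r, E r /\ s <= r)) as [[r [[_ Hr] Hsr]]|Hn].
    - apply Hr. lra.
    - exfalso. assert (T <= s). { apply HTl. intros r Hr. destruct (Rle_dec r s); auto.
        exfalso. apply Hn. exists r. split; auto. lra. }
      lra. }
  assert (HTz : forall x y, Z x y T = 0).
  { intros x y. destruct (Req_dec T 0) as [->|HTn]; auto.
    apply small_zero. intros e He. destruct (Hcont T HT0 e He) as [d [Hd Hd']].
    set (s := Rmax 0 (T - d / 2)).
    assert (Hs1 : 0 <= s < T) by (unfold s, Rmax; destruct Rle_dec; lra).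
    assert (Hs2 : Rabs (s - T) < d) by (unfold s, Rmax; destruct Rle_dec; rewrite Rabs_left; lra).
    specialize (Hd' s (proj1 Hs1) Hs2 x y). rewrite (Hbelow s Hs1) in Hd'.
    rewrite Rminus_0_l, Rabs_Ropp in Hd'. auto. }
  destruct (local_zero T HT0 HTz) as [h [Hh Hh']].
  assert (T + h <= T); [|lra].
  apply HTub. split; [lra|]. intros s Hs x y.
  destruct (Rlt_dec s T). apply Hbelow; lra. apply Hh'; lra.
Qed.
End Uniq.

Lemma abs6 a b c d e f : Rabs (a - b + c + d - e + f) <=
  Rabs a + Rabs b + Rabs c + Rabs d + Rabs e + Rabs f.
Proof. unfold Rabs; repeat destruct Rcase_abs; lra. Qed.

Lemma rhs_bound eps u v W x y t m B : 0 < eps ->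
  (forall a b, Rabs (W a b t) <= m) ->
  (forall a b, Rabs (u a b t) <= B /\ Rabs (v a b t) <= B) ->
  Rabs (rhs eps u v W x y t) <= 6 * B / eps * m.
Proof.
  intros He HW Hu. unfold rhs.
  assert (T1 : forall a b, Rabs (W a b t * Defs.pos (u a b t)) <= m * B).
  { intros a b. rewrite Rabs_mult. pose proof (pos_bounds (u a b t)).
    apply Rmult_le_compat; auto using Rabs_pos. rewrite Rabs_right by lra.
    destruct (Hu a b); lra. }
  assert (T2 : forall a b, Rabs (W a b t * Defs.neg (u a b t)) <= m * B).
  { intros a b. rewrite Rabs_mult. pose proof (neg_bounds (u a b t)).
    apply Rmult_le_compat; auto using Rabs_pos. rewrite Rabs_right by lra.
    destruct (Hu a b); lra. }
  assert (T3 : forall a b, Rabs (W a b t * Defs.pos (v a b t)) <= m * B).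
  { intros a b. rewrite Rabs_mult. pose proof (pos_bounds (v a b t)).
    apply Rmult_le_compat; auto using Rabs_pos. rewrite Rabs_right by lra.
    destruct (Hu a b); lra. }
  assert (T4 : forall a b, Rabs (W a b t * Defs.neg (v a b t)) <= m * B).
  { intros a b. rewrite Rabs_mult. pose proof (neg_bounds (v a b t)).
    apply Rmult_le_compat; auto using Rabs_pos. rewrite Rabs_right by lra.
    destruct (Hu a b); lra. }
  assert (T5 : forall a b, Rabs (W a b t * Rabs (u a b t)) <= m * B).
  { intros a b. rewrite Rabs_mult, Rabs_Rabsolu.
    apply Rmult_le_compat; auto using Rabs_pos. destruct (Hu a b); lra. }
  assert (T6 : forall a b, Rabs (W a b t * Rabs (v a b t)) <= m * B).
  { intros a b. rewrite Rabs_mult, Rabs_Rabsolu.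
    apply Rmult_le_compat; auto using Rabs_pos. destruct (Hu a b); lra. }
  rewrite Rabs_mult, Rabs_inv, (Rabs_right eps) by lra.
  replace (6 * B / eps * m) with (/ eps * (6 * (m * B))) by (field; lra).
  apply Rmult_le_compat_l. left; apply Rinv_0_lt_compat; lra.
  eapply Rle_trans; [apply abs6|].
  specialize (T1 (x - eps) y); specialize (T5 x y); specialize (T2 (x + eps) y);
  specialize (T3 x (y - eps)); specialize (T6 x y); specialize (T4 x (y + eps)).
  lra.
Qed.

Section Per.
Variables (eps : R) (uu vv XX : R -> R -> R -> R) (r0 : R -> R -> R) (B p q : R).
Hypothesis Heps : 0 < eps.
Hypothesis HX : is_C1_solution eps uu vv XX r0.
Hypothesis HB : forall x y t, 0 <= t -> Rabs (uu x y t) <= B /\ Rabs (vv x y t) <= B.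
Hypothesis Hper : forall x y t, 0 <= t -> uu (x + p) (y + q) t = uu x y t /\ vv (x + p) (y + q) t = vv x y t.
Hypothesis Hr0 : forall x y, r0 (x + p) (y + q) = r0 x y.

Lemma X_shift_periodic : forall t, 0 <= t -> forall x y, XX (x + p) (y + q) t = XX x y t.
Proof.
  destruct HX as [[_ Hc] [Hi [Hd _]]].
  set (Z := fun x y t => XX (x + p) (y + q) t - XX x y t).
  assert (HB0 : 0 <= B) by (destruct (HB 0 0 0 ltac:(lra)); pose proof (Rabs_pos (uu 0 0 0)); lra).
  assert (Hz := unique0 Z (rhs eps uu vv Z) (6 * B / eps)).
  intros t Ht x y. enough (Z x y t = 0) by (unfold Z in *; lra).
  apply Hz; auto.
  - apply Rmult_le_pos. apply Rmult_le_pos; lra. left; apply Rinv_0_lt_compat; lra.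
  - intros t0 Ht0 e He. destruct (Hc t0 Ht0 (e/2) ltac:(lra)) as [d [Hd0 Hd']].
    exists d; split; auto. intros s Hs Hsd x0 y0. unfold Z.
    specialize (Hd' s Hs Hsd). pose proof (Hd' (x0 + p) (y0 + q)). pose proof (Hd' x0 y0).
    replace (XX (x0 + p) (y0 + q) s - XX x0 y0 s - (XX (x0 + p) (y0 + q) t0 - XX x0 y0 t0))
      with ((XX (x0 + p) (y0 + q) s - XX (x0 + p) (y0 + q) t0) - (XX x0 y0 s - XX x0 y0 t0)) by ring.
    eapply Rle_trans. apply Rabs_triang. rewrite Rabs_Ropp. lra.
  - intros x0 y0. unfold Z. rewrite !Hi, Hr0. ring.
  - intros t0 Ht0 x0 y0.
    assert (H1 := pw_deriv XX (rhs eps uu vv XX) t0 (x0 + p) (y0 + q) Ht0 (Hd t0 ltac:(lra))).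
    assert (H2 := pw_deriv XX (rhs eps uu vv XX) t0 x0 y0 Ht0 (Hd t0 ltac:(lra))).
    assert (H3 := is_derive_minus _ _ _ _ _ H1 H2). simpl in H3.
    replace (rhs eps uu vv Z x0 y0 t0) with (minus (rhs eps uu vv XX (x0 + p) (y0 + q) t0) (rhs eps uu vv XX x0 y0 t0)).
    { exact H3. }
    { unfold Z, rhs, minus, plus, opp; simpl.
    destruct (Hper (x0 - eps) y0 t0) as [P1 _]; [lra|].
    destruct (Hper (x0 + eps) y0 t0) as [P2 _]; [lra|].
    destruct (Hper x0 (y0 - eps) t0) as [_ P3]; [lra|].
    destruct (Hper x0 (y0 + eps) t0) as [_ P4]; [lra|].
    destruct (Hper x0 y0 t0) as [P5 P6]; [lra|].
    replace (x0 + p - eps) with (x0 - eps + p) by ring.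
    replace (x0 + p + eps) with (x0 + eps + p) by ring.
    replace (y0 + q - eps) with (y0 - eps + q) by ring.
    replace (y0 + q + eps) with (y0 + eps + q) by ring.
    rewrite P1, P2, P3, P4, P5, P6.
    replace (x0 - eps + p) with (x0 + p - eps) by ring.
    replace (x0 + eps + p) with (x0 + p + eps) by ring.
    replace (y0 - eps + q) with (y0 + q - eps) by ring.
    replace (y0 + eps + q) with (y0 + q + eps) by ring.
    ring. }
  - intros t0 m Ht0 Hm x0 y0. apply rhs_bound; auto.
Qed.
End Per.

Lemma cont_shift (f : R -> R) c : (forall z, continuous f z) -> forall z, continuous (fun z => f (1 * z + c)) z.
Proof.
  intros Hf z. apply (continuous_comp (fun z => 1 * z + c) f); [|apply Hf].
  apply cont_of_eps. intros e He. exists e; split; auto. intros w Hw.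
  replace (1 * w + c - (1 * z + c)) with (w - z) by ring. auto.
Qed.

Lemma RInt_shift (f : R -> R) c p q : (forall z, continuous f z) ->
  RInt (fun z => f (z + c)) p q = RInt f (p + c) (q + c).
Proof.
  intros Hf. pose proof (RInt_comp_lin f 1 c p q) as H.
  replace (p + c) with (1 * p + c) by ring. replace (q + c) with (1 * q + c) by ring.
  rewrite <- H by (apply ex_RInt_cont_R; auto).
  apply RInt_ext. intros z _. unfold scal; simpl; unfold mult; simpl. rewrite !Rmult_1_l. reflexivity.
Qed.

Lemma Req_conv (a b : R) : a = b -> a = b.
Proof. auto. Qed.

Section Per1.
Variable f : R -> R.
Hypothesis Hf : forall z, continuous f z.
Hypothesis Hp : forall z, f (z + 2 * PI) = f z.

Lemma per_shift c : RInt f c (c + 2 * PI) = RInt f (- PI) PI.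
Proof.
  assert (Hex : forall p q, ex_RInt f p q) by (intros; apply ex_RInt_cont_R; auto).
  rewrite <- (RInt_Chasles_R f c PI (c + 2 * PI)) by auto.
  assert (E : RInt f PI (c + 2 * PI) = RInt f (- PI) c).
  { transitivity (RInt (fun z => f (z + 2 * PI)) (- PI) c).
    - rewrite RInt_shift by auto. f_equal; ring.
    - apply RInt_ext. intros; apply Hp. }
  rewrite E, Rplus_comm. apply RInt_Chasles_R; auto.
Qed.

Lemma per_int_shift c : RInt (fun z => f (z + c)) (- PI) PI = RInt f (- PI) PI.
Proof.
  rewrite RInt_shift by auto. rewrite <- (per_shift (- PI + c)). f_equal. ring.
Qed.

Lemma per_n (n : nat) c : RInt f c (c + 2 * PI * INR n) = INR n * RInt f (- PI) PI.
Proof.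
  assert (Hex : forall p q, ex_RInt f p q) by (intros; apply ex_RInt_cont_R; auto).
  induction n as [|n IH].
  - simpl. rewrite Rmult_0_r, Rplus_0_r, RInt_point. apply Req_conv. unfold zero; simpl. ring.
  - rewrite S_INR. rewrite <- (RInt_Chasles_R f c (c + 2 * PI * INR n)) by auto.
    rewrite IH. replace (c + 2 * PI * (INR n + 1)) with ((c + 2 * PI * INR n) + 2 * PI) by ring.
    rewrite per_shift. apply Req_conv. ring.
Qed.

Lemma per_box (n : nat) c w : (forall z, 0 <= f z) -> 0 <= w <= 2 * PI * INR n ->
  RInt f c (c + w) <= INR n * RInt f (- PI) PI.
Proof.
  intros Hpos Hw.
  assert (Hex : forall p q, ex_RInt f p q) by (intros; apply ex_RInt_cont_R; auto).
  rewrite <- (per_n n c). rewrite <- (RInt_Chasles_R f c (c + w) (c + 2 * PI * INR n)) by auto.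
  assert (0 <= RInt f (c + w) (c + 2 * PI * INR n)); [|lra].
  apply RInt_ge_0; auto; lra.
Qed.
End Per1.

Definition per2 (F : R -> R -> R) := forall a b, F (a + 2 * PI) b = F a b /\ F a (b + 2 * PI) = F a b.

Section Per2.
Variable F : R -> R -> R.
Hypothesis HF : cont2 F.
Hypothesis HP : per2 F.

Lemma cell_shift_x c : dint (fun a b => F (a + c) b) (- PI) PI (- PI) PI = dint F (- PI) PI (- PI) PI.
Proof.
  unfold dint. apply (per_int_shift (fun a => RInt (fun b => F a b) (- PI) PI)).
  - intros z. apply param_cont; auto.
  - intros z. apply RInt_ext. intros. apply HP.
Qed.

Lemma cell_shift_y c : dint (fun a b => F a (b + c)) (- PI) PI (- PI) PI = dint F (- PI) PI (- PI) PI.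
Proof.
  unfold dint. apply RInt_ext. intros a _.
  apply (per_int_shift (fun b => F a b)).
  - apply cont2_y; auto.
  - intros z. apply HP.
Qed.

Lemma box_bound (n : nat) c1 w1 c2 w2 : (forall a b, 0 <= F a b) ->
  0 <= w1 <= 2 * PI * INR n -> 0 <= w2 <= 2 * PI * INR n ->
  dint F c1 (c1 + w1) c2 (c2 + w2) <= INR n * (INR n * dint F (- PI) PI (- PI) PI).
Proof.
  intros Hpos H1 H2. unfold dint.
  set (H := fun a => RInt (fun b => F a b) (- PI) PI).
  assert (HHc : forall z, continuous H z) by (intros; apply param_cont; auto).
  assert (HHp : forall z, H (z + 2 * PI) = H z) by (intros; apply RInt_ext; intros; apply HP).
  assert (HHpos : forall z, 0 <= H z).
  { intros z. apply RInt_ge_0. pose proof PI_RGT_0; lra. apply ex_RInt_y; auto. intros; auto. }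
  apply Rle_trans with (RInt (fun a => INR n * H a) c1 (c1 + w1)).
  - apply RInt_le; [lra|apply ex_RInt_outer; auto| |].
    + apply ex_RInt_scal_R. apply ex_RInt_cont_R; auto.
    + intros a _. apply per_box; auto.
      * apply cont2_y; auto.
      * intros; apply HP.
  - rewrite RInt_scal_R by (apply ex_RInt_cont_R; auto).
    apply Rmult_le_compat_l; [apply pos_INR|]. apply per_box; auto.
Qed.
End Per2.

Section G.
Variable d : R.
Hypothesis Hd : 0 < d.

Definition gg (s : R) := sqrt (s ^ 2 + d ^ 2).
Definition gg' (s : R) := s / sqrt (s ^ 2 + d ^ 2).

Lemma S_pos s : 0 < s ^ 2 + d ^ 2.
Proof. nra. Qed.

Lemma S_ge s : d <= sqrt (s ^ 2 + d ^ 2).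
Proof.
  rewrite <- (sqrt_pow2 d) at 1 by lra. apply sqrt_le_1_alt. nra.
Qed.

Lemma S_ge_abs s : Rabs s <= sqrt (s ^ 2 + d ^ 2).
Proof.
  rewrite <- sqrt_Rsqr_abs. apply sqrt_le_1_alt. unfold Rsqr. nra.
Qed.

Lemma S_le s : sqrt (s ^ 2 + d ^ 2) <= Rabs s + d.
Proof.
  pose proof (Rabs_pos s). rewrite <- (sqrt_pow2 (Rabs s + d)) by lra.
  apply sqrt_le_1_alt. rewrite <- (pow2_abs s). nra.
Qed.
Lemma G1 s : Rabs s <= gg s <= Rabs s + d.
Proof. unfold gg. split. apply S_ge_abs. apply S_le. Qed.

Lemma G2 s : Rabs (gg' s) <= 1.
Proof.
  unfold gg'. pose proof (S_ge s). pose proof (S_ge_abs s).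
  unfold Rdiv. rewrite Rabs_mult, Rabs_inv, (Rabs_right (sqrt _)) by lra.
  apply Rmult_le_reg_r with (sqrt (s ^ 2 + d ^ 2)). lra.
  rewrite Rmult_assoc, Rinv_l by lra. lra.
Qed.

Lemma G3 s : Rabs s - d <= gg' s * s.
Proof.
  unfold gg'. pose proof (S_ge s). pose proof (S_le s).
  replace (s / sqrt (s ^ 2 + d ^ 2) * s) with (s ^ 2 / sqrt (s ^ 2 + d ^ 2)) by (field; lra).
  apply Rmult_le_reg_r with (sqrt (s ^ 2 + d ^ 2)). lra.
  unfold Rdiv. rewrite Rmult_assoc, Rinv_l by lra. rewrite Rmult_1_r.
  destruct (Rle_dec (Rabs s) d).
  - assert (Rabs s - d <= 0) by lra. pose proof (pow2_ge_0 s). nra.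
  - apply Rle_trans with ((Rabs s - d) * (Rabs s + d)).
    + apply Rmult_le_compat_l; lra.
    + rewrite <- (pow2_abs s). nra.
Qed.

Lemma gg_der s : is_derive gg s (gg' s).
Proof.
  unfold gg, gg'. auto_derive. pose proof (S_pos s); simpl in *; nra.
  pose proof (S_ge s). simpl. replace (s * (s * 1) + d * (d * 1)) with (s ^ 2 + d ^ 2) by ring. field. lra.
Qed.

Definition gg'' (s : R) := / sqrt (s ^ 2 + d ^ 2) - s ^ 2 / (sqrt (s ^ 2 + d ^ 2) * (s ^ 2 + d ^ 2)).

Lemma gg'_der s : is_derive gg' s (gg'' s).
Proof.
  unfold gg', gg''. auto_derive.
  - pose proof (S_pos s); pose proof (S_ge s).
    replace (s * (s * 1) + d * (d * 1)) with (s ^ 2 + d ^ 2) by ring. split; [lra|split; [lra|auto]].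
  - pose proof (S_ge s). pose proof (S_pos s).
    replace (s * (s * 1) + d * (d * 1)) with (s ^ 2 + d ^ 2) by ring.
    assert (Hsq : sqrt (s ^ 2 + d ^ 2) * sqrt (s ^ 2 + d ^ 2) = s ^ 2 + d ^ 2) by (apply sqrt_sqrt; lra).
    set (S := sqrt (s ^ 2 + d ^ 2)) in *. rewrite Hsq. field. split; lra.
Qed.

Lemma gg''_bound s : Rabs (gg'' s) <= / d.
Proof.
  unfold gg''. pose proof (S_ge s). pose proof (S_pos s).
  assert (Hsq : sqrt (s ^ 2 + d ^ 2) * sqrt (s ^ 2 + d ^ 2) = s ^ 2 + d ^ 2) by (apply sqrt_sqrt; lra).
  set (S := sqrt (s ^ 2 + d ^ 2)) in *.
  replace (/ S - s ^ 2 / (S * (s ^ 2 + d ^ 2))) with (d ^ 2 / (S * (s ^ 2 + d ^ 2))).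
  2:{ field. split; lra. }
  rewrite Rabs_right.
  2:{ apply Rle_ge. apply Rmult_le_pos. nra. left. apply Rinv_0_lt_compat. nra. }
  rewrite <- Hsq. apply Rle_trans with (d ^ 2 / (d * (d * d))).
  - unfold Rdiv. apply Rmult_le_compat_l. nra. apply Rinv_le_contravar. apply Rmult_lt_0_compat; [lra|apply Rmult_lt_0_compat; lra].
    apply Rmult_le_compat; try nra.
  - right; field; lra.
Qed.

Lemma gg_cont s : continuous gg s.
Proof. apply (ex_derive_continuous (K:=R_AbsRing) (V:=R_NormedModule)). eexists. apply gg_der. Qed.
Lemma gg'_cont s : continuous gg' s.
Proof. apply (ex_derive_continuous (K:=R_AbsRing) (V:=R_NormedModule)). eexists. apply gg'_der. Qed.

Lemma gg'_lip a b : Rabs (gg' b - gg' a) <= Rabs (b - a) / d.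
Proof.
  destruct (Rtotal_order a b) as [H|[H|H]].
  - rewrite (Rabs_right (b - a)) by lra. unfold Rdiv. rewrite Rmult_comm.
    apply (mvt_abs gg' gg'' a b (/ d)); auto.
    + intros; apply gg'_der.
    + intros t _ e He. destruct (eps_of_cont gg' t (gg'_cont t) e He) as [dd [Hdd H']].
      exists dd; split; auto.
    + intros; apply gg''_bound.
  - subst. rewrite !Rminus_diag, Rabs_R0. unfold Rdiv; lra.
  - rewrite <- Rabs_Ropp. replace (- (gg' b - gg' a)) with (gg' a - gg' b) by ring.
    rewrite (Rabs_left (b - a)) by lra. replace (- (b - a)) with (a - b) by ring.
    unfold Rdiv. rewrite Rmult_comm.
    apply (mvt_abs gg' gg'' b a (/ d)); auto.
    + intros; apply gg'_der.
    + intros t _ e He. destruct (eps_of_cont gg' t (gg'_cont t) e He) as [dd [Hdd H']].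
      exists dd; split; auto.
    + intros; apply gg''_bound.
Qed.

Lemma gg_lip a b : Rabs (gg b - gg a) <= Rabs (b - a).
Proof.
  destruct (Rtotal_order a b) as [H|[H|H]].
  - rewrite (Rabs_right (b - a)) by lra. rewrite <- (Rmult_1_l (b - a)).
    apply (mvt_abs gg gg' a b 1); auto.
    + intros; apply gg_der.
    + intros t _ e He. destruct (eps_of_cont gg t (gg_cont t) e He) as [dd [Hdd H']].
      exists dd; split; auto.
    + intros; apply G2.
  - subst. rewrite !Rminus_diag, Rabs_R0. lra.
  - rewrite <- Rabs_Ropp. replace (- (gg b - gg a)) with (gg a - gg b) by ring.
    rewrite (Rabs_left (b - a)) by lra. replace (- (b - a)) with (1 * (a - b)) by ring.
    apply (mvt_abs gg gg' b a 1); auto.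
    + intros; apply gg_der.
    + intros t _ e He. destruct (eps_of_cont gg t (gg_cont t) e He) as [dd [Hdd H']].
      exists dd; split; auto.
    + intros; apply G2.
Qed.

Lemma G4 a b : Rabs (gg b - gg a - gg' a * (b - a)) <= (b - a) ^ 2 / d.
Proof.
  set (h := fun r => gg r - gg' a * r).
  assert (Hh : forall r, is_derive h r (gg' r - gg' a)).
  { intros r. unfold h. assert (H1 : is_derive (fun r => gg' a * r) r (gg' a * 1)) by (apply is_derive_scal; apply (is_derive_id r)).
    assert (H2 := is_derive_minus _ _ _ _ _ (gg_der r) H1). rewrite Rmult_1_r in H2. exact H2. }
  assert (Hc : forall t e, 0 < e -> exists dd, 0 < dd /\ forall s, Rabs (s - t) < dd -> Rabs (h s - h t) < e).
  { intros t e He. apply eps_of_cont; auto. apply (ex_derive_continuous (K:=R_AbsRing) (V:=R_NormedModule)). eexists; apply Hh. }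
  replace (gg b - gg a - gg' a * (b - a)) with (h b - h a) by (unfold h; ring).
  destruct (Rtotal_order a b) as [H|[H|H]].
  - replace ((b - a) ^ 2 / d) with (((b - a) / d) * (b - a)) by (field; lra).
    apply (mvt_abs h (fun r => gg' r - gg' a)); auto.
    + intros t _ e He. destruct (Hc t e He) as [dd [H1 H2]]. exists dd; split; auto.
    + intros t Ht. eapply Rle_trans. apply gg'_lip. rewrite Rabs_right by lra.
      unfold Rdiv; apply Rmult_le_compat_r. left; apply Rinv_0_lt_compat; lra. lra.
  - subst. unfold h. rewrite !Rminus_diag, Rabs_R0. unfold Rdiv. simpl. lra.
  - rewrite <- Rabs_Ropp. replace (- (h b - h a)) with (h a - h b) by ring.
    replace ((b - a) ^ 2 / d) with (((a - b) / d) * (a - b)) by (field; lra).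
    apply (mvt_abs h (fun r => gg' r - gg' a)); auto.
    + intros t _ e He. destruct (Hc t e He) as [dd [H1 H2]]. exists dd; split; auto.
    + intros t Ht. eapply Rle_trans. apply gg'_lip. rewrite (Rabs_left (t - a)) by lra.
      unfold Rdiv; apply Rmult_le_compat_r. left; apply Rinv_0_lt_compat; lra. lra.
Qed.
End G.

Lemma cont2_sx f c : cont2 f -> cont2 (fun a b => f (a + c) b).
Proof. intros H. apply (cont2_comp f (fun a _ => a + c) (fun _ b => b)); auto.
  apply cont2_plus; [apply cont2_fst|apply cont2_const]. apply cont2_snd. Qed.
Lemma cont2_sy f c : cont2 f -> cont2 (fun a b => f a (b + c)).
Proof. intros H. apply (cont2_comp f (fun a _ => a) (fun _ b => b + c)); auto.
  apply cont2_fst. apply cont2_plus; [apply cont2_snd|apply cont2_const]. Qed.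

Lemma dint_ext F G a1 a2 b1 b2 : (forall a b, F a b = G a b) -> dint F a1 a2 b1 b2 = dint G a1 a2 b1 b2.
Proof. intros H. unfold dint. apply RInt_ext. intros. apply RInt_ext. intros. apply H. Qed.

Lemma dint_const c a1 a2 b1 b2 : dint (fun _ _ => c) a1 a2 b1 b2 = (a2 - a1) * ((b2 - b1) * c).
Proof.
  unfold dint. rewrite (RInt_ext _ (fun _ => (b2 - b1) * c)).
  - rewrite RInt_const. reflexivity.
  - intros. rewrite RInt_const. reflexivity.
Qed.

Lemma Cb_cont2 f : Cb f -> cont2 f.
Proof. intros [H _]; auto. Qed.

Lemma pt_ineq s X0 Xm Xp Ym Yp um u0 up vm v0 vp d B e :
  0 < e -> Rabs s <= 1 -> Rabs X0 - d <= s * X0 -> Rabs u0 <= B -> Rabs v0 <= B -> 0 <= d ->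
  s * (/ e * (Xm * Defs.pos um - X0 * Rabs u0 + Xp * Defs.neg up + Ym * Defs.pos vm - X0 * Rabs v0 + Yp * Defs.neg vp))
  <= / e * ((Rabs Xm * Defs.pos um - Rabs X0 * Defs.pos u0) + (Rabs Xp * Defs.neg up - Rabs X0 * Defs.neg u0)
          + (Rabs Ym * Defs.pos vm - Rabs X0 * Defs.pos v0) + (Rabs Yp * Defs.neg vp - Rabs X0 * Defs.neg v0)
          + 2 * d * B).
Proof.
  intros He Hs HX Hu Hv Hd.
  rewrite <- Rmult_assoc, (Rmult_comm s), Rmult_assoc.
  apply Rmult_le_compat_l. left; apply Rinv_0_lt_compat; auto.
  assert (K : forall z w, 0 <= w -> s * (z * w) <= Rabs z * w).
  { intros z w Hw. rewrite <- Rmult_assoc. apply Rmult_le_compat_r; auto.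
    eapply Rle_trans. apply Rle_abs. rewrite Rabs_mult. rewrite <- (Rmult_1_l (Rabs z)) at 2.
    apply Rmult_le_compat_r; auto. apply Rabs_pos. }
  pose proof (K Xm _ (proj1 (pos_bounds um))). pose proof (K Xp _ (proj1 (neg_bounds up))).
  pose proof (K Ym _ (proj1 (pos_bounds vm))). pose proof (K Yp _ (proj1 (neg_bounds vp))).
  rewrite (pos_neg u0), (pos_neg v0).
  assert (K2 : forall w, 0 <= w -> w <= B -> - (s * (X0 * w)) <= - (Rabs X0 * w) + d * B).
  { intros w Hw HwB. rewrite <- Rmult_assoc.
    assert (- (s * X0 * w) <= - ((Rabs X0 - d) * w)) by (apply Ropp_le_contravar; apply Rmult_le_compat_r; auto).
    assert (d * w <= d * B) by (apply Rmult_le_compat_l; auto). lra. }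
  pose proof (pos_neg u0) as E1. pose proof (pos_neg v0) as E2.
  pose proof (pos_bounds u0); pose proof (neg_bounds u0); pose proof (pos_bounds v0); pose proof (neg_bounds v0).
  assert (A1 := K2 (Defs.pos u0 + Defs.neg u0) ltac:(lra) ltac:(lra)).
  assert (A2 := K2 (Defs.pos v0 + Defs.neg v0) ltac:(lra) ltac:(lra)).
  nra.
Qed.

Ltac c2 :=
  lazymatch goal with
  | |- cont2 (fun a b => @?f a b * @?g a b) => apply (cont2_mult f g); c2
  | |- cont2 (fun a b => @?f a b + @?g a b) => apply (cont2_plus f g); c2
  | |- cont2 (fun a b => @?f a b - @?g a b) => apply (cont2_minus f g); c2
  | |- cont2 (fun a b => - @?f a b) => apply (cont2_opp f); c2
  | |- cont2 (fun a b => Rabs (@?f a b)) => apply (cont2_abs f); c2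
  | |- cont2 (fun a b => Defs.pos (@?f a b)) => apply (cont2_comp1 Defs.pos f); [apply cont_pos|c2]
  | |- cont2 (fun a b => Defs.neg (@?f a b)) => apply (cont2_comp1 Defs.neg f); [apply cont_neg|c2]
  | |- cont2 (fun a b => gg ?d (@?f a b)) => apply (cont2_comp1 (gg d) f); [intros; apply gg_cont; assumption|c2]
  | |- cont2 (fun a b => gg' ?d (@?f a b)) => apply (cont2_comp1 (gg' d) f); [intros; apply gg'_cont; assumption|c2]
  | |- _ => first [ assumption | apply cont2_const | apply cont2_sx; c2 | apply cont2_sy; c2 ]
  end.

Section L1.
Variables (eps : R) (uu vv XX : R -> R -> R -> R) (r0 : R -> R -> R) (B : R).
Hypothesis Heps : 0 < eps.
Hypothesis HX : is_C1_solution eps uu vv XX r0.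
Hypothesis HB : forall x y t, 0 <= t -> Rabs (uu x y t) <= B /\ Rabs (vv x y t) <= B.
Hypothesis Hucont : cont_Cb uu /\ cont_Cb vv.
Hypothesis Hper_uv : forall t, 0 <= t -> per2 (fun x y => uu x y t) /\ per2 (fun x y => vv x y t).
Hypothesis HXper : forall t, 0 <= t -> per2 (fun x y => XX x y t).
Hypothesis Hr0 : Cb r0.

Let c := (PI - - PI) * (PI - - PI).

Lemma c_pos : 0 < c.
Proof. unfold c. pose proof PI_RGT_0. nra. Qed.

Lemma cX t : 0 <= t -> cont2 (fun x y => XX x y t).
Proof. intros Ht. destruct HX as [[H _] _]. apply Cb_cont2. apply H; auto. Qed.
Lemma cR t : 0 <= t -> cont2 (fun x y => rhs eps uu vv XX x y t).
Proof. intros Ht. destruct HX as [_ [_ [_ [H _]]]]. apply Cb_cont2. apply H; auto. Qed.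
Lemma cU t : 0 <= t -> cont2 (fun x y => uu x y t).
Proof. intros Ht. destruct Hucont as [[H _] _]. apply Cb_cont2. apply H; auto. Qed.
Lemma cV t : 0 <= t -> cont2 (fun x y => vv x y t).
Proof. intros Ht. destruct Hucont as [_ [H _]]. apply Cb_cont2. apply H; auto. Qed.

Lemma cell_bound F M : cont2 F -> (forall a b, Rabs (F a b) <= M) ->
  Rabs (dint F (- PI) PI (- PI) PI) <= c * M.
Proof.
  intros HF H. pose proof PI_RGT_0. unfold c. rewrite Rmult_assoc.
  apply dint_abs_bound; auto; lra.
Qed.

Section Delta.
Variable d : R.
Hypothesis Hd : 0 < d.

Definition FF t := dint (fun x y => gg d (XX x y t)) (- PI) PI (- PI) PI.
Definition II t := dint (fun x y => gg' d (XX x y t) * rhs eps uu vv XX x y t) (- PI) PI (- PI) PI.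

Lemma cgg f : cont2 f -> cont2 (fun a b => gg d (f a b)).
Proof. intros. apply cont2_comp1; auto. apply gg_cont; auto. Qed.
Lemma cgg' f : cont2 f -> cont2 (fun a b => gg' d (f a b)).
Proof. intros. apply cont2_comp1; auto. apply gg'_cont; auto. Qed.

Lemma II_le t : 0 <= t -> II t <= / eps * (c * (2 * d * B)).
Proof.
  intros Ht. pose proof (cX t Ht). pose proof (cU t Ht). pose proof (cV t Ht).
  destruct (Hper_uv t Ht) as [Pu Pv]. pose proof (HXper t Ht) as PX.
  set (P := fun a b => Rabs (XX a b t) * Defs.pos (uu a b t)).
  set (N := fun a b => Rabs (XX a b t) * Defs.neg (uu a b t)).
  set (Q := fun a b => Rabs (XX a b t) * Defs.pos (vv a b t)).
  set (S := fun a b => Rabs (XX a b t) * Defs.neg (vv a b t)).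
  assert (cP : cont2 P) by (unfold P; c2). assert (cN : cont2 N) by (unfold N; c2).
  assert (cQ : cont2 Q) by (unfold Q; c2). assert (cS : cont2 S) by (unfold S; c2).
  assert (pP : per2 P) by (intros a b; unfold P; rewrite (proj1 (PX a b)), (proj2 (PX a b)), (proj1 (Pu a b)), (proj2 (Pu a b)); auto).
  assert (pN : per2 N) by (intros a b; unfold N; rewrite (proj1 (PX a b)), (proj2 (PX a b)), (proj1 (Pu a b)), (proj2 (Pu a b)); auto).
  assert (pQ : per2 Q) by (intros a b; unfold Q; rewrite (proj1 (PX a b)), (proj2 (PX a b)), (proj1 (Pv a b)), (proj2 (Pv a b)); auto).
  assert (pS : per2 S) by (intros a b; unfold S; rewrite (proj1 (PX a b)), (proj2 (PX a b)), (proj1 (Pv a b)), (proj2 (Pv a b)); auto).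
  set (W := fun a b => / eps * ((P (a - eps) b - P a b) + (N (a + eps) b - N a b)
                + (Q a (b - eps) - Q a b) + (S a (b + eps) - S a b) + 2 * d * B)).
  assert (cW : cont2 W) by (unfold W; c2).
  apply Rle_trans with (dint W (- PI) PI (- PI) PI).
  - unfold II. apply dint_le; auto.
    + apply cont2_mult. apply cgg'; auto. apply cR; auto.
    + pose proof PI_RGT_0; lra.
    + pose proof PI_RGT_0; lra.
    + intros a b _ _. unfold W, P, N, Q, S, rhs.
      apply pt_ineq; auto; try lra.
      * apply G2; auto.
      * apply G3; auto.
      * apply HB; auto.
      * apply HB; auto.
  - unfold W. rewrite dint_scal by c2. apply Rmult_le_compat_l.
    { left; apply Rinv_0_lt_compat; auto. }
    rewrite dint_plus by c2. rewrite dint_const.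
    rewrite !dint_plus by c2. rewrite !dint_minus by c2.
    assert (E1 : dint (fun a b => P (a - eps) b) (- PI) PI (- PI) PI = dint P (- PI) PI (- PI) PI)
      by exact (cell_shift_x P cP pP (- eps)).
    assert (E2 : dint (fun a b => N (a + eps) b) (- PI) PI (- PI) PI = dint N (- PI) PI (- PI) PI)
      by exact (cell_shift_x N cN pN eps).
    assert (E3 : dint (fun a b => Q a (b - eps)) (- PI) PI (- PI) PI = dint Q (- PI) PI (- PI) PI)
      by exact (cell_shift_y Q cQ pQ (- eps)).
    assert (E4 : dint (fun a b => S a (b + eps)) (- PI) PI (- PI) PI = dint S (- PI) PI (- PI) PI)
      by exact (cell_shift_y S cS pS eps).
    rewrite E1, E2, E3, E4. unfold c. lra.
Qed.

Lemma FF_deriv t : 0 < t -> is_derive FF t (II t).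
Proof.
  intros Ht. apply is_derive_Reals. intros e He.
  pose proof c_pos as Hc.
  destruct HX as [[HXc HXcont] [Hi [Hder [HRc _]]]].
  destruct (HRc t (Rlt_le _ _ Ht)) as [_ [BR HBR]].
  assert (HBR0 : 0 <= BR) by (pose proof (HBR 0 0); pose proof (Rabs_pos (rhs eps uu vv XX 0 0 t)); lra).
  set (e1 := Rmin 1 (e / (4 * c))).
  assert (He1 : 0 < e1) by (unfold e1; apply Rmin_pos; [lra|apply Rdiv_lt_0_compat; lra]).
  assert (He1a : e1 <= 1) by apply Rmin_l.
  assert (He1b : e1 <= e / (4 * c)) by apply Rmin_r.
  destruct (Hder t (Rlt_le _ _ Ht) e1 He1) as [d1 [Hd1 Hd1']].
  set (d2 := e * d / (4 * c * (BR + 1) ^ 2)).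
  assert (Hd2 : 0 < d2) by (unfold d2; apply Rdiv_lt_0_compat; [nra|]; apply Rmult_lt_0_compat; [lra|]; apply pow_lt; lra).
  assert (Hdl : 0 < Rmin d1 (Rmin t d2)) by (apply Rmin_pos; [lra|apply Rmin_pos; lra]).
  exists (mkposreal _ Hdl). intros h Hh0 Hh. simpl in Hh.
  assert (Hh1 : Rabs h < d1) by (eapply Rlt_le_trans; [exact Hh|apply Rmin_l]).
  assert (Hh2 : Rabs h < t) by (eapply Rlt_le_trans; [exact Hh|]; eapply Rle_trans; [apply Rmin_r|apply Rmin_l]).
  assert (Hh3 : Rabs h < d2) by (eapply Rlt_le_trans; [exact Hh|]; eapply Rle_trans; [apply Rmin_r|apply Rmin_r]).
  assert (Hth : 0 <= t + h) by (apply Rabs_lt_between in Hh2; lra).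
  assert (HhA : 0 < Rabs h) by (apply Rabs_pos_lt; auto).
  pose proof (cX t (Rlt_le _ _ Ht)) as cXt. pose proof (cX (t + h) Hth) as cXth.
  pose proof (cR t (Rlt_le _ _ Ht)) as cRt.
  set (Psi := fun a b => gg d (XX a b (t + h)) - gg d (XX a b t) - h * (gg' d (XX a b t) * rhs eps uu vv XX a b t)).
  assert (EPsi : dint Psi (- PI) PI (- PI) PI = FF (t + h) - FF t - h * II t).
  { unfold Psi, FF, II. rewrite !dint_minus by c2. rewrite dint_scal by c2. reflexivity. }
  set (M := Rabs h * (Rabs h * (BR + 1) ^ 2 / d + e1)).
  assert (HPsi : forall a b, Rabs (Psi a b) <= M).
  { intros a b. unfold Psi, M.
    set (X0 := XX a b t). set (X1 := XX a b (t + h)). set (R0 := rhs eps uu vv XX a b t).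
    assert (H1 : Rabs ((X1 - X0) / h - R0) <= e1) by (apply Hd1'; auto).
    assert (H2 : Rabs (X1 - X0 - h * R0) <= Rabs h * e1).
    { replace (X1 - X0 - h * R0) with (h * ((X1 - X0) / h - R0)) by (field; auto).
      rewrite Rabs_mult. apply Rmult_le_compat_l; auto. apply Rabs_pos. }
    assert (H3 : Rabs (X1 - X0) <= Rabs h * (BR + 1)).
    { replace (X1 - X0) with ((X1 - X0 - h * R0) + h * R0) by ring.
      eapply Rle_trans. apply Rabs_triang. rewrite Rabs_mult.
      pose proof (HBR a b). fold R0 in H. pose proof (Rabs_pos h).
      assert (Rabs h * Rabs R0 <= Rabs h * BR) by (apply Rmult_le_compat_l; auto). nra. }
    assert (H4 := G4 d Hd X0 X1).
    assert (H5 : (X1 - X0) ^ 2 <= (Rabs h * (BR + 1)) ^ 2).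
    { rewrite <- (pow2_abs (X1 - X0)). apply pow_incr. split; auto. apply Rabs_pos. }
    assert (H6 : (X1 - X0) ^ 2 / d <= (Rabs h * (BR + 1)) ^ 2 / d).
    { unfold Rdiv. apply Rmult_le_compat_r; auto. left; apply Rinv_0_lt_compat; auto. }
    assert (H7 : Rabs (gg' d X0 * (X1 - X0 - h * R0)) <= Rabs h * e1).
    { rewrite Rabs_mult. pose proof (G2 d Hd X0). pose proof (Rabs_pos (gg' d X0)).
      pose proof (Rabs_pos (X1 - X0 - h * R0)). nra. }
    replace (gg d X1 - gg d X0 - h * (gg' d X0 * R0)) with
      ((gg d X1 - gg d X0 - gg' d X0 * (X1 - X0)) + gg' d X0 * (X1 - X0 - h * R0)) by ring.
    eapply Rle_trans. apply Rabs_triang.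
    replace (Rabs h * (Rabs h * (BR + 1) ^ 2 / d + e1)) with ((Rabs h * (BR + 1)) ^ 2 / d + Rabs h * e1) by (field; lra).
    lra. }
  assert (HI : Rabs (dint Psi (- PI) PI (- PI) PI) <= c * M).
  { apply cell_bound; auto. unfold Psi. c2. }
  rewrite EPsi in HI.
  replace ((FF (t + h) - FF t) / h - II t) with ((FF (t + h) - FF t - h * II t) / h) by (field; auto).
  unfold Rdiv. rewrite Rabs_mult, Rabs_inv.
  apply Rle_lt_trans with (c * M * / Rabs h).
  { apply Rmult_le_compat_r; auto. left; apply Rinv_0_lt_compat; auto. }
  unfold M. replace (c * (Rabs h * (Rabs h * (BR + 1) ^ 2 / d + e1)) * / Rabs h)
    with (c * (Rabs h * (BR + 1) ^ 2 / d) + c * e1) by (field; lra).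
  assert (Hq : c * (Rabs h * (BR + 1) ^ 2 / d) < e / 4).
  { assert (HB1 : 0 < (BR + 1) ^ 2) by (apply pow_lt; lra).
    apply Rlt_le_trans with (c * (d2 * (BR + 1) ^ 2 / d)).
    - apply Rmult_lt_compat_l; [lra|]. unfold Rdiv. apply Rmult_lt_compat_r. apply Rinv_0_lt_compat; auto.
      apply Rmult_lt_compat_r; lra.
    - unfold d2. right. field. split; lra. }
  assert (Hq2 : c * e1 <= e / 4).
  { apply Rle_trans with (c * (e / (4 * c))). apply Rmult_le_compat_l; lra. right; field; lra. }
  lra.
Qed.

Lemma FF_cont t : 0 <= t -> forall e, 0 < e -> exists dd, 0 < dd /\
  forall s, 0 <= s -> Rabs (s - t) < dd -> Rabs (FF s - FF t) < e.
Proof.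
  intros Ht e He. pose proof c_pos as Hc.
  destruct HX as [[HXc HXcont] _].
  destruct (HXcont t Ht (e / (2 * c))) as [dd [Hdd H']]. { apply Rdiv_lt_0_compat; lra. }
  exists dd; split; auto. intros s Hs Hsd.
  pose proof (cX t Ht). pose proof (cX s Hs).
  unfold FF. rewrite <- dint_minus by c2.
  eapply Rle_lt_trans. apply cell_bound with (M := e / (2 * c)). c2.
  - intros a b. eapply Rle_trans. apply gg_lip; auto. apply H'; auto.
  - replace (c * (e / (2 * c))) with (e / 2) by (field; lra). lra.
Qed.

Lemma FF_grow t : 0 <= t -> FF t - FF 0 <= / eps * (c * (2 * d * B)) * (t - 0).
Proof.
  intros Ht. destruct (Req_dec t 0) as [->|Hn]. { rewrite !Rminus_diag. lra. }
  apply (mvt_le FF II 0 t); [lra| | |].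
  - intros s Hs. apply FF_deriv. lra.
  - intros s Hs e He. destruct (FF_cont s ltac:(lra) e He) as [dd [H1 H2]].
    exists dd; split; auto. intros s' Hs' Hsd. apply H2; auto; lra.
  - intros s Hs. apply II_le. lra.
Qed.
End Delta.

Lemma le_eps a b k : (forall dl, 0 < dl -> a <= b + dl * k) -> a <= b.
Proof.
  intros H. destruct (Rle_dec a b) as [|Hn]; auto. exfalso.
  set (dl := (a - b) / (2 * (Rabs k + 1))).
  assert (Hdl : 0 < dl) by (unfold dl; apply Rdiv_lt_0_compat; [lra|pose proof (Rabs_pos k); lra]).
  specialize (H dl Hdl).
  assert (dl * k <= dl * Rabs k) by (apply Rmult_le_compat_l; [lra|apply Rle_abs]).
  assert (dl * Rabs k < a - b).
  { unfold dl. pose proof (Rabs_pos k).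
    apply Rmult_lt_reg_r with (2 * (Rabs k + 1)). lra. field_simplify; nra. }
  lra.
Qed.

Lemma L1_bound t : 0 <= t ->
  dint (fun x y => Rabs (XX x y t)) (- PI) PI (- PI) PI <= dint (fun x y => Rabs (r0 x y)) (- PI) PI (- PI) PI.
Proof.
  intros Ht. pose proof PI_RGT_0. pose proof c_pos.
  assert (cr0 : cont2 r0) by (apply Cb_cont2; auto).
  apply le_eps with (k := c + / eps * (c * (2 * B)) * t). intros dl Hdl.
  pose proof (cX t Ht) as cXt.
  assert (A : dint (fun x y => Rabs (XX x y t)) (- PI) PI (- PI) PI <= FF dl t).
  { unfold FF. apply dint_le; try c2; try lra. intros a b _ _. apply G1; auto. }
  assert (Bg := FF_grow dl Hdl t Ht).
  assert (C : FF dl 0 <= dint (fun x y => Rabs (r0 x y)) (- PI) PI (- PI) PI + c * dl).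
  { unfold FF. destruct HX as [_ [Hi _]].
    rewrite (dint_ext _ (fun x y => gg dl (r0 x y))) by (intros; rewrite Hi; auto).
    apply Rle_trans with (dint (fun x y => Rabs (r0 x y) + dl) (- PI) PI (- PI) PI).
    - apply dint_le; try c2; try lra. intros a b _ _. apply G1; auto.
    - rewrite dint_plus by c2. rewrite dint_const. unfold c. lra. }
  assert (E : / eps * (c * (2 * dl * B)) * (t - 0) = dl * (/ eps * (c * (2 * B)) * t)) by (field; lra).
  lra.
Qed.
End L1.

Definition supp (f : R -> R -> R) (K : R) := forall a b, K < Rabs a \/ K < Rabs b -> f a b = 0.

Lemma bounded_box f K : cont2 f -> 0 <= K -> exists M, forall a b, -K <= a <= K -> -K <= b <= K -> Rabs (f a b) <= M.
Proof.
  intros Hf HK.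
  assert (Hmax : forall a, exists bm, (forall b, -K <= b <= K -> Rabs (f a b) <= Rabs (f a bm)) /\ -K <= bm <= K).
  { intros a. destruct (continuity_ab_maj (fun b => Rabs (f a b)) (-K) K) as [bm [H1 H2]]; [lra| |].
    - intros c0 _. apply continuity_pt_filterlim. apply continuous_Rabs_comp. apply cont2_y; auto.
    - exists bm; split; auto. }
  set (bm := fun a => proj1_sig (constructive_indefinite_description _ (Hmax a))).
  assert (Hbm : forall a, (forall b, -K <= b <= K -> Rabs (f a b) <= Rabs (f a (bm a))) /\ -K <= bm a <= K).
  { intros a. unfold bm. destruct constructive_indefinite_description as [x Hx]. simpl. auto. }
  set (g := fun a => Rabs (f a (bm a))).
  assert (Hg : forall a, -K <= a <= K -> continuity_pt g a).
  { intros a Ha. apply continuity_pt_filterlim. apply cont_of_eps. intros e He.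
    destruct (uniform_continuity_2d f (-K - 1) (K + 1) (-K) K) with (eps := mkposreal e He) as [d Hd].
    { intros; apply cont2_2d; auto. }
    exists (Rmin d 1). split. { apply Rmin_pos; [apply cond_pos|lra]. }
    intros y Hy. simpl in Hd.
    assert (H1 : Rabs (y - a) < d) by (eapply Rlt_le_trans; [exact Hy|apply Rmin_l]).
    assert (H2 : Rabs (y - a) < 1) by (eapply Rlt_le_trans; [exact Hy|apply Rmin_r]).
    apply Rabs_lt_between' in H2.
    destruct (Hbm a) as [Ha1 Ha2]. destruct (Hbm y) as [Hy1 Hy2].
    unfold g.
    assert (E1 : Rabs (f y (bm a) - f a (bm a)) < e) by (apply Hd; try lra; rewrite Rminus_diag, Rabs_R0; apply cond_pos).
    assert (E2 : Rabs (f a (bm y) - f y (bm y)) < e).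
    { apply Hd; try lra. rewrite <- Rabs_Ropp. replace (- (a - y)) with (y - a) by ring. auto.
      rewrite Rminus_diag, Rabs_R0; apply cond_pos. }
    assert (F1 := Ha1 (bm y) Hy2). assert (F2 := Hy1 (bm a) Ha2).
    pose proof (Rabs_triang_inv (f y (bm a)) (f a (bm a))).
    pose proof (Rabs_triang_inv (f a (bm a)) (f y (bm a))).
    pose proof (Rabs_triang_inv (f a (bm y)) (f y (bm y))).
    pose proof (Rabs_triang_inv (f y (bm y)) (f a (bm y))).
    assert (E1' : Rabs (f a (bm a) - f y (bm a)) < e) by (rewrite Rabs_minus_sym; auto).
    assert (E2' : Rabs (f y (bm y) - f a (bm y)) < e) by (rewrite Rabs_minus_sym; auto).
    apply Rabs_lt_between'. split; lra. }
  destruct (continuity_ab_maj g (-K) K) as [am [Ham1 Ham2]]; [lra|auto|].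
  exists (g am). intros a b Ha Hb. eapply Rle_trans; [apply (proj1 (Hbm a)); auto|]. apply Ham1; auto.
Qed.

Lemma bounded_supp f K : cont2 f -> supp f K -> exists M, forall a b, Rabs (f a b) <= M.
Proof.
  intros Hf Hs. destruct (bounded_box f (Rabs K) Hf (Rabs_pos K)) as [M HM].
  exists (Rmax M 0). intros a b.
  destruct (Rle_dec (Rabs a) K) as [Ha|Ha]; destruct (Rle_dec (Rabs b) K) as [Hb|Hb].
  - eapply Rle_trans; [|apply Rmax_l]. apply HM.
    + apply Rabs_le_between. pose proof (Rle_abs K). lra.
    + apply Rabs_le_between. pose proof (Rle_abs K). lra.
  - rewrite Hs by lra. rewrite Rabs_R0. apply Rmax_r.
  - rewrite Hs by lra. rewrite Rabs_R0. apply Rmax_r.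
  - rewrite Hs by lra. rewrite Rabs_R0. apply Rmax_r.
Qed.

Lemma supp_dx f K : 0 <= K -> supp f K -> supp (dx f) K.
Proof.
  intros HK Hs a b Hab. unfold dx.
  destruct (Rlt_dec K (Rabs b)) as [Hb|Hb].
  - rewrite (Derive_ext _ (fun _ => 0)). apply Derive_const. intros. apply Hs. auto.
  - destruct Hab as [Ha|Hb']; [|contradiction].
    rewrite (Derive_ext_loc _ (fun _ => 0)). apply Derive_const.
    assert (Hr : 0 < Rabs a - K) by lra.
    exists (mkposreal _ Hr). intros y Hy. change R in y. apply Hs. left.
    change (Rabs (y - a) < Rabs a - K) in Hy.
    pose proof (Rabs_triang_inv a (a - y)). replace (a - (a - y)) with y in H by ring.
    rewrite Rabs_minus_sym in Hy. lra.
Qed.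

Lemma supp_dy f K : 0 <= K -> supp f K -> supp (dy f) K.
Proof.
  intros HK Hs a b Hab. unfold dy.
  destruct (Rlt_dec K (Rabs a)) as [Ha|Ha].
  - rewrite (Derive_ext _ (fun _ => 0)). apply Derive_const. intros. apply Hs. auto.
  - destruct Hab as [Ha'|Hb]; [contradiction|].
    rewrite (Derive_ext_loc _ (fun _ => 0)). apply Derive_const.
    assert (Hr : 0 < Rabs b - K) by lra.
    exists (mkposreal _ Hr). intros y Hy. change R in y. apply Hs. right.
    change (Rabs (y - b) < Rabs b - K) in Hy.
    pose proof (Rabs_triang_inv b (b - y)). replace (b - (b - y)) with y in H by ring.
    rewrite Rabs_minus_sym in Hy. lra.
Qed.

Lemma taylor2 (f f1 f2 : R -> R) M z h : (forall s, is_derive f s (f1 s)) ->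
  (forall s, is_derive f1 s (f2 s)) -> (forall s, Rabs (f2 s) <= M) ->
  Rabs (f (z + h) - f z - h * f1 z) <= M * h ^ 2.
Proof.
  intros H1 H2 HM.
  assert (HM0 : 0 <= M) by (pose proof (HM 0); pose proof (Rabs_pos (f2 0)); lra).
  assert (Hc1 : forall s, continuous f1 s) by (intros; apply (ex_derive_continuous (K:=R_AbsRing) (V:=R_NormedModule)); eexists; apply H2).
  assert (Lip : forall a b, Rabs (f1 b - f1 a) <= M * Rabs (b - a)).
  { intros a b. destruct (Rtotal_order a b) as [H|[H|H]].
    - rewrite (Rabs_right (b - a)) by lra. apply (mvt_abs f1 f2); auto.
      intros t _ e He. destruct (eps_of_cont f1 t (Hc1 t) e He) as [d [Hd H']]. exists d; split; auto.
    - subst. rewrite !Rminus_diag, Rabs_R0. lra.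
    - rewrite Rabs_minus_sym, (Rabs_left (b - a)) by lra. replace (- (b - a)) with (a - b) by ring.
      apply (mvt_abs f1 f2); auto.
      intros t _ e He. destruct (eps_of_cont f1 t (Hc1 t) e He) as [d [Hd H']]. exists d; split; auto. }
  set (g := fun r => f r - f1 z * r).
  assert (Hg : forall r, is_derive g r (f1 r - f1 z)).
  { intros r. unfold g. assert (H3 : is_derive (fun r => f1 z * r) r (f1 z * 1)) by (apply is_derive_scal; apply (is_derive_id r)).
    assert (H4 := is_derive_minus _ _ _ _ _ (H1 r) H3). rewrite Rmult_1_r in H4. exact H4. }
  assert (Hgc : forall r, continuous g r) by (intros; apply (ex_derive_continuous (K:=R_AbsRing) (V:=R_NormedModule)); eexists; apply Hg).
  replace (f (z + h) - f z - h * f1 z) with (g (z + h) - g z) by (unfold g; ring).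
  destruct (Rtotal_order h 0) as [H|[H|H]].
  - rewrite Rabs_minus_sym. replace (M * h ^ 2) with ((M * Rabs h) * (z - (z + h))) by (rewrite Rabs_left by lra; ring).
    apply (mvt_abs g (fun r => f1 r - f1 z)); [lra|auto| |].
    + intros t _ e He. destruct (eps_of_cont g t (Hgc t) e He) as [d [Hd H']]. exists d; split; auto.
    + intros t Ht. eapply Rle_trans. apply Lip. apply Rmult_le_compat_l; auto.
      rewrite Rabs_left by lra. rewrite Rabs_left1 by lra. lra.
  - subst. rewrite Rplus_0_r, Rminus_diag, Rabs_R0. simpl. lra.
  - replace (M * h ^ 2) with ((M * Rabs h) * ((z + h) - z)) by (rewrite Rabs_right by lra; ring).
    apply (mvt_abs g (fun r => f1 r - f1 z)); [lra|auto| |].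
    + intros t _ e He. destruct (eps_of_cont g t (Hgc t) e He) as [d [Hd H']]. exists d; split; auto.
    + intros t Ht. eapply Rle_trans. apply Lip. apply Rmult_le_compat_l; auto.
      rewrite (Rabs_right h) by lra. rewrite Rabs_right by lra. lra.
Qed.

Lemma dint_deriv (F : R -> R -> R -> R) (G : R -> R -> R) s0 a1 a2 b1 b2 C :
  a1 <= a2 -> b1 <= b2 -> (forall s, cont2 (F s)) -> cont2 G ->
  (forall h a b, Rabs h < 1 -> Rabs (F (s0 + h) a b - F s0 a b - h * G a b) <= C * h ^ 2) ->
  is_derive (fun s => dint (F s) a1 a2 b1 b2) s0 (dint G a1 a2 b1 b2).
Proof.
  intros Ha Hb HF HG HC. apply is_derive_Reals. intros e He.
  set (A := (a2 - a1) * (b2 - b1) * Rabs C + 1).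
  assert (HA : 0 < A) by (unfold A; pose proof (Rabs_pos C); assert (0 <= (a2 - a1) * (b2 - b1)) by nra; nra).
  assert (Hd : 0 < Rmin 1 (e / A)) by (apply Rmin_pos; [lra|apply Rdiv_lt_0_compat; lra]).
  exists (mkposreal _ Hd). intros h Hh0 Hh. simpl in Hh.
  assert (Hh1 : Rabs h < 1) by (eapply Rlt_le_trans; [exact Hh|apply Rmin_l]).
  assert (Hh2 : Rabs h < e / A) by (eapply Rlt_le_trans; [exact Hh|apply Rmin_r]).
  assert (HhA : 0 < Rabs h) by (apply Rabs_pos_lt; auto).
  assert (E : dint (fun a b => F (s0 + h) a b - F s0 a b - h * G a b) a1 a2 b1 b2 =
              dint (F (s0 + h)) a1 a2 b1 b2 - dint (F s0) a1 a2 b1 b2 - h * dint G a1 a2 b1 b2).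
  { assert (c1 : cont2 (fun a b => F (s0 + h) a b - F s0 a b)) by (apply cont2_minus; apply HF).
    assert (c2 : cont2 (fun a b => h * G a b)) by (apply cont2_mult; auto; apply cont2_const).
    rewrite (dint_minus _ _ _ _ _ _ c1 c2).
    rewrite (dint_minus _ _ _ _ _ _ (HF (s0 + h)) (HF s0)).
    rewrite (dint_scal _ _ _ _ _ _ HG). reflexivity. }
  assert (Bd := dint_abs_bound (fun a b => F (s0 + h) a b - F s0 a b - h * G a b) a1 a2 b1 b2 (Rabs C * h ^ 2)).
  rewrite E in Bd.
  assert (Bd' : Rabs (dint (F (s0 + h)) a1 a2 b1 b2 - dint (F s0) a1 a2 b1 b2 - h * dint G a1 a2 b1 b2)
                 <= (a2 - a1) * ((b2 - b1) * (Rabs C * h ^ 2))).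
  { apply Bd; auto.
    - apply cont2_minus. apply cont2_minus; auto. apply cont2_mult; auto. apply cont2_const.
    - intros a b _ _. eapply Rle_trans. apply HC; auto. apply Rmult_le_compat_r. apply pow2_ge_0. apply Rle_abs. }
  replace ((dint (F (s0 + h)) a1 a2 b1 b2 - dint (F s0) a1 a2 b1 b2) / h - dint G a1 a2 b1 b2)
    with ((dint (F (s0 + h)) a1 a2 b1 b2 - dint (F s0) a1 a2 b1 b2 - h * dint G a1 a2 b1 b2) / h) by (field; auto).
  unfold Rdiv. rewrite Rabs_mult, Rabs_inv.
  apply Rle_lt_trans with ((a2 - a1) * ((b2 - b1) * (Rabs C * h ^ 2)) * / Rabs h).
  { apply Rmult_le_compat_r; auto. left; apply Rinv_0_lt_compat; auto. }
  replace ((a2 - a1) * ((b2 - b1) * (Rabs C * h ^ 2)) * / Rabs h) with (((a2 - a1) * (b2 - b1) * Rabs C) * Rabs h).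
  2:{ rewrite <- (pow2_abs h). field. lra. }
  apply Rle_lt_trans with (A * Rabs h). { apply Rmult_le_compat_r. apply Rabs_pos. unfold A; lra. }
  apply Rlt_le_trans with (A * (e / A)). { apply Rmult_lt_compat_l; auto. }
  right; field; lra.
Qed.

Lemma cont2_xmin f x y : cont2 f -> cont2 (fun a b => f (x - a) (y - b)).
Proof.
  intros H. apply (cont2_comp f (fun a _ => x - a) (fun _ b => y - b)); auto.
  apply cont2_minus; [apply cont2_const|apply cont2_fst].
  apply cont2_minus; [apply cont2_const|apply cont2_snd].
Qed.

Lemma cont2_moll phi d : cont2 phi -> cont2 (moll phi d).
Proof.
  intros H. unfold moll. apply cont2_mult. apply cont2_const.
  apply (cont2_comp phi (fun a _ => a / d) (fun _ b => b / d)); auto.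
  apply cont2_mult; [apply cont2_fst|apply cont2_const].
  apply cont2_mult; [apply cont2_snd|apply cont2_const].
Qed.

Section Conv.
Variables (phi : R -> R -> R) (K d : R) (Xt : R -> R -> R).
Hypothesis Hphi : cont2 phi.
Hypothesis Hsupp : supp phi K.
Hypothesis Hd : 0 < d.
Hypothesis HX : cont2 Xt.

Definition RR0 := (Rabs K + 1) * d.
Definition WW := RR0 + 1.

Lemma R0_pos : 0 < RR0.
Proof. unfold RR0. pose proof (Rabs_pos K). nra. Qed.

Lemma moll_zero a b : RR0 < Rabs a \/ RR0 < Rabs b -> moll phi d a b = 0.
Proof.
  intros H. unfold moll. rewrite Hsupp. ring.
  assert (Hk : forall z, RR0 < Rabs z -> K < Rabs (z / d)).
  { intros z Hz. unfold Rdiv. rewrite Rabs_mult, Rabs_inv, (Rabs_right d) by lra.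
    unfold RR0 in Hz. apply Rmult_lt_reg_r with d; auto. rewrite Rmult_assoc, Rinv_l, Rmult_1_r by lra.
    pose proof (Rle_abs K). nra. }
  destruct H; [left|right]; apply Hk; auto.
Qed.

Lemma conv_rep x y c e : Rabs (x - c) <= 1 -> Rabs (y - e) <= 1 ->
  conv2 Xt (moll phi d) x y =
  dint (fun a b => Xt a b * moll phi d (x - a) (y - b)) (c - WW) (c + WW) (e - WW) (e + WW).
Proof.
  intros Hxc Hye. pose proof R0_pos as HR.
  apply Rabs_le_between in Hxc. apply Rabs_le_between in Hye.
  assert (cm := cont2_moll phi d Hphi).
  set (m := moll phi d) in *.
  set (A := fun a => RInt (fun z => Xt (x - a) z * m a (y - z)) (e - WW) (e + WW)).
  assert (cA : cont2 (fun a z => Xt (x - a) z * m a (y - z))).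
  { apply cont2_mult.
    - apply (cont2_comp Xt (fun a _ => x - a) (fun _ z => z)); auto.
      apply cont2_minus; [apply cont2_const|apply cont2_fst]. apply cont2_snd.
    - apply (cont2_comp m (fun a _ => a) (fun _ z => y - z)); auto.
      apply cont2_fst. apply cont2_minus; [apply cont2_const|apply cont2_snd]. }
  assert (Inner : forall a, RInt_gen (fun b => Xt (x - a) (y - b) * m a b)
                    (Rbar_locally m_infty) (Rbar_locally p_infty) = A a).
  { intros a. rewrite (gen_eq _ y e WW RR0).
    - unfold A. apply RInt_ext. intros z _. replace (y - (y - z)) with z by ring. reflexivity.
    - intros z. apply (cont2_y (fun a b => Xt (x - a) (y - b) * m a b) a). apply cont2_mult. apply cont2_xmin; auto. auto.
    - lra.
    - intros z Hz. unfold m. rewrite moll_zero by auto. ring.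
    - unfold WW; lra.
    - unfold WW; lra. }
  unfold conv2, int_R2.
  rewrite (functional_extensionality _ _ Inner).
  rewrite (gen_eq A x c WW RR0).
  - unfold dint. apply RInt_ext. intros z _. unfold A. apply RInt_ext. intros w _.
    replace (x - (x - z)) with z by ring. reflexivity.
  - intros z. apply param_cont. auto.
  - lra.
  - intros z Hz. unfold A. rewrite (RInt_ext _ (fun _ => 0)).
    + rewrite RInt_const. unfold scal; simpl; unfold mult; simpl. apply Rmult_0_r.
    + intros w _. unfold m. rewrite moll_zero by auto. apply Rmult_0_r.
  - unfold WW; lra.
  - unfold WW; lra.
Qed.
End Conv.

Lemma comp_dx (psi : R -> R -> R) d k w s : 0 < d -> (forall x y, ex_derive (fun x' => psi x' y) x) ->
  is_derive (fun s => k * psi (s / d) w) s ((k * / d) * dx psi (s / d) w).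
Proof.
  intros Hd Hex. rewrite Rmult_assoc. apply is_derive_scal.
  assert (H1 : is_derive (fun x' => psi x' w) (s / d) (dx psi (s / d) w)).
  { unfold dx. apply Derive_correct. apply Hex. }
  assert (H2 : is_derive (fun s => s / d) s (/ d)).
  { auto_derive; auto. field. lra. }
  assert (H3 := is_derive_comp (fun x' => psi x' w) (fun s => s / d) s _ _ H1 H2).
  exact H3.
Qed.

Lemma comp_dy (psi : R -> R -> R) d k w s : 0 < d -> (forall x y, ex_derive (fun y' => psi x y') y) ->
  is_derive (fun s => k * psi w (s / d)) s ((k * / d) * dy psi w (s / d)).
Proof.
  intros Hd Hex. rewrite Rmult_assoc. apply is_derive_scal.
  assert (H1 : is_derive (fun y' => psi w y') (s / d) (dy psi w (s / d))).
  { unfold dy. apply Derive_correct. apply Hex. }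
  assert (H2 : is_derive (fun s => s / d) s (/ d)).
  { auto_derive; auto. field. lra. }
  assert (H3 := is_derive_comp (fun y' => psi w y') (fun s => s / d) s _ _ H1 H2).
  exact H3.
Qed.

Section Box.
Variables (Xt : R -> R -> R) (n : nat) (L1 : R).
Hypothesis HX : cont2 Xt.
Hypothesis HP : per2 Xt.
Hypothesis HL1 : dint (fun a b => Rabs (Xt a b)) (- PI) PI (- PI) PI <= L1.

Lemma weighted_bound (w : R -> R -> R) Mw c e W : cont2 w -> (forall a b, Rabs (w a b) <= Mw) ->
  0 <= W -> 2 * W <= 2 * PI * INR n ->
  Rabs (dint (fun a b => Xt a b * w a b) (c - W) (c + W) (e - W) (e + W)) <= Mw * (INR n * (INR n * L1)).
Proof.
  intros Hw HMw HW HWn.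
  assert (HMw0 : 0 <= Mw) by (pose proof (HMw 0 0); pose proof (Rabs_pos (w 0 0)); lra).
  eapply Rle_trans. apply dint_abs; try lra. apply cont2_mult; auto.
  apply Rle_trans with (dint (fun a b => Mw * Rabs (Xt a b)) (c - W) (c + W) (e - W) (e + W)).
  { apply dint_le; try lra.
    - apply cont2_abs. apply cont2_mult; auto.
    - apply cont2_mult. apply cont2_const. apply cont2_abs; auto.
    - intros a b _ _. rewrite Rabs_mult, Rmult_comm. apply Rmult_le_compat_r. apply Rabs_pos. auto. }
  rewrite dint_scal by (apply cont2_abs; auto). apply Rmult_le_compat_l; auto.
  replace (c + W) with ((c - W) + 2 * W) by ring. replace (e + W) with ((e - W) + 2 * W) by ring.
  assert (cF : cont2 (fun a b => Rabs (Xt a b))) by (apply cont2_abs; auto).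
  assert (pF : per2 (fun a b => Rabs (Xt a b))).
  { intros a b. rewrite (proj1 (HP a b)), (proj2 (HP a b)). auto. }
  eapply Rle_trans. apply (box_bound _ cF pF n); [intros; apply Rabs_pos|lra|lra].
  pose proof (pos_INR n). apply Rmult_le_compat_l; auto. apply Rmult_le_compat_l; auto.
Qed.
End Box.

Lemma cont2_scaled psi k d : cont2 psi -> cont2 (fun a b => k * psi (a / d) (b / d)).
Proof.
  intros H. apply cont2_mult. apply cont2_const.
  apply (cont2_comp psi (fun a _ => a / d) (fun _ b => b / d)); auto.
  apply cont2_mult; [apply cont2_fst|apply cont2_const].
  apply cont2_mult; [apply cont2_snd|apply cont2_const].
Qed.

Section Deriv.
Variables (phi : R -> R -> R) (K d : R) (Xt : R -> R -> R) (BX : R).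
Hypothesis Hphi : Ck 2 phi.
Hypothesis Hsupp : supp phi K.
Hypothesis Hd : 0 < d.
Hypothesis HX : cont2 Xt.
Hypothesis HBX : forall a b, Rabs (Xt a b) <= BX.

Definition m1 s b := (/ (d ^ 2) * / d) * dx phi (s / d) (b / d).
Definition m2 s b := (/ (d ^ 2) * / d) * dy phi (s / d) (b / d).

Lemma supp_abs : supp phi (Rabs K).
Proof. intros a b H. apply Hsupp. pose proof (Rle_abs K). lra. Qed.

Lemma conv_dx x0 y0 : is_derive (fun x => conv2 Xt (moll phi d) x y0) x0
  (dint (fun a b => Xt a b * m1 (x0 - a) (y0 - b)) (x0 - WW K d) (x0 + WW K d) (y0 - WW K d) (y0 + WW K d)).
Proof.
  destruct Hphi as [cphi [exx [exy [[cphi1 [exx1 [exy1 [cphi11 _]]]] _]]]].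
  assert (S11 : supp (dx (dx phi)) (Rabs K)) by (apply supp_dx; [apply Rabs_pos|]; apply supp_dx; [apply Rabs_pos|apply supp_abs]).
  destruct (bounded_supp _ _ cphi11 S11) as [M11 HM11].
  assert (HW : 0 < WW K d) by (unfold WW; pose proof (R0_pos K d Hd); lra).
  set (W := WW K d) in *.
  apply is_derive_ext_loc with (fun s => dint (fun a b => Xt a b * moll phi d (s - a) (y0 - b))
      (x0 - W) (x0 + W) (y0 - W) (y0 + W)).
  - exists (mkposreal 1 Rlt_0_1). intros s Hs. change (Rabs (s - x0) < 1) in Hs.
    symmetry. unfold W. apply (conv_rep phi K d Xt cphi Hsupp Hd HX); [lra|].
    rewrite Rminus_diag, Rabs_R0; lra.
  - set (k2 := / (d ^ 2) * / d * / d).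
    apply dint_deriv with (C := BX * (Rabs k2 * M11)); try lra.
    + intros s. apply cont2_mult; auto. apply cont2_xmin. apply cont2_moll; auto.
    + apply cont2_mult; auto. apply cont2_xmin. unfold m1. apply cont2_scaled; auto.
    + intros h a b _.
      set (w := (y0 - b) / d).
      assert (T := taylor2 (fun s => / (d ^ 2) * phi (s / d) w)
                           (fun s => (/ (d ^ 2) * / d) * dx phi (s / d) w)
                           (fun s => k2 * dx (dx phi) (s / d) w) (Rabs k2 * M11) (x0 - a) h).
      assert (T' : Rabs (moll phi d (x0 + h - a) (y0 - b) - moll phi d (x0 - a) (y0 - b) - h * m1 (x0 - a) (y0 - b))
                   <= Rabs k2 * M11 * h ^ 2).
      { unfold moll, m1. fold w. replace (x0 + h - a) with (x0 - a + h) by ring. apply T.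
        - intros s. apply comp_dx; auto.
        - intros s. unfold k2. apply comp_dx; auto.
        - intros s. rewrite Rabs_mult. apply Rmult_le_compat_l. apply Rabs_pos. apply HM11. }
      replace (Xt a b * moll phi d (x0 + h - a) (y0 - b) - Xt a b * moll phi d (x0 - a) (y0 - b) -
               h * (Xt a b * m1 (x0 - a) (y0 - b)))
        with (Xt a b * (moll phi d (x0 + h - a) (y0 - b) - moll phi d (x0 - a) (y0 - b) - h * m1 (x0 - a) (y0 - b))) by ring.
      rewrite Rabs_mult. rewrite Rmult_assoc. apply Rmult_le_compat; auto using Rabs_pos.

Qed.

Lemma conv_dy x0 y0 : is_derive (fun y => conv2 Xt (moll phi d) x0 y) y0
  (dint (fun a b => Xt a b * m2 (x0 - a) (y0 - b)) (x0 - WW K d) (x0 + WW K d) (y0 - WW K d) (y0 + WW K d)).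
Proof.
  destruct Hphi as [cphi [exx [exy [_ [cphi2 [exx2 [exy2 [_ cphi22]]]]]]]].
  assert (S22 : supp (dy (dy phi)) (Rabs K)) by (apply supp_dy; [apply Rabs_pos|]; apply supp_dy; [apply Rabs_pos|apply supp_abs]).
  destruct (bounded_supp _ _ cphi22 S22) as [M22 HM22].
  assert (HW : 0 < WW K d) by (unfold WW; pose proof (R0_pos K d Hd); lra).
  set (W := WW K d) in *.
  set (F := fun s a b => Xt a b * moll phi d (x0 - a) (s - b)).
  set (G := fun a b => Xt a b * m2 (x0 - a) (y0 - b)).
  assert (HD : is_derive (fun s => dint (fun a b => F s a b) (x0 - W) (x0 + W) (y0 - W) (y0 + W)) y0
                 (dint G (x0 - W) (x0 + W) (y0 - W) (y0 + W))).
  { set (k2 := / (d ^ 2) * / d * / d).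
    apply dint_deriv with (C := BX * (Rabs k2 * M22)); try lra.
    + intros s. unfold F. apply cont2_mult; auto. apply cont2_xmin. apply cont2_moll; auto.
    + unfold G. apply cont2_mult; auto. apply cont2_xmin. unfold m2. apply cont2_scaled; auto.
    + intros h a b _. unfold F, G.
      set (w := (x0 - a) / d).
      assert (T := taylor2 (fun s => / (d ^ 2) * phi w (s / d))
                           (fun s => (/ (d ^ 2) * / d) * dy phi w (s / d))
                           (fun s => k2 * dy (dy phi) w (s / d)) (Rabs k2 * M22) (y0 - b) h).
      assert (T' : Rabs (moll phi d (x0 - a) (y0 + h - b) - moll phi d (x0 - a) (y0 - b) - h * m2 (x0 - a) (y0 - b))
                   <= Rabs k2 * M22 * h ^ 2).
      { unfold moll, m2. fold w. replace (y0 + h - b) with (y0 - b + h) by ring. apply T.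
        - intros s. apply comp_dy; auto.
        - intros s. unfold k2. apply comp_dy; auto.
        - intros s. rewrite Rabs_mult. apply Rmult_le_compat_l. apply Rabs_pos. apply HM22. }
      replace (Xt a b * moll phi d (x0 - a) (y0 + h - b) - Xt a b * moll phi d (x0 - a) (y0 - b) -
               h * (Xt a b * m2 (x0 - a) (y0 - b)))
        with (Xt a b * (moll phi d (x0 - a) (y0 + h - b) - moll phi d (x0 - a) (y0 - b) - h * m2 (x0 - a) (y0 - b))) by ring.
      rewrite Rabs_mult. rewrite Rmult_assoc. apply Rmult_le_compat; auto using Rabs_pos.
      }
  apply is_derive_ext_loc with (fun s => dint (fun a b => F s a b) (x0 - W) (x0 + W) (y0 - W) (y0 + W)); auto.
  exists (mkposreal 1 Rlt_0_1). intros s Hs. change (Rabs (s - y0) < 1) in Hs.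
  symmetry. unfold W, F. apply (conv_rep phi K d Xt cphi Hsupp Hd HX); [|lra].
  rewrite Rminus_diag, Rabs_R0; lra.
Qed.
End Deriv.

Lemma exists_nat_ge x : exists n : nat, x <= INR n.
Proof.
  destruct (archimed x) as [H1 _].
  exists (Z.to_nat (up x)). destruct (Z_le_gt_dec 0 (up x)) as [Hz|Hz].
  - rewrite INR_IZR_INZ, Z2Nat.id by auto. lra.
  - assert (Hz2 : (up x < 0)%Z) by lia. apply IZR_lt in Hz2. simpl in Hz2. pose proof (pos_INR (Z.to_nat (up x))). lra.
Qed.

Lemma delta_props eps alpha : 0 < eps < 1 -> 0 < alpha -> 0 < Rpower eps alpha < 1.
Proof.
  intros He Ha. split. unfold Rpower. apply exp_pos.
  unfold Rpower. rewrite <- exp_0. apply exp_increasing.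
  assert (ln eps < 0) by (rewrite <- ln_1; apply ln_increasing; lra). nra.
Qed.

Lemma Rpower_2 eps alpha : Rpower eps (2 * alpha) = Rpower eps alpha ^ 2.
Proof. replace (2 * alpha) with (alpha + alpha) by ring. rewrite Rpower_plus. ring. Qed.
Lemma Rpower_3 eps alpha : Rpower eps (3 * alpha) = Rpower eps alpha ^ 2 * Rpower eps alpha.
Proof. replace (3 * alpha) with (alpha + alpha + alpha) by ring. rewrite !Rpower_plus. ring. Qed.

Theorem mainTheorem8
  (u v : R -> R -> R -> R -> R)          (* u eps x y t, v eps x y t *)
  (rho0 : R -> R -> R -> R)              (* rho0 eps x y *)
  (X : R -> R -> R -> R -> R)            (* X eps x y t *)
  (phi : R -> R -> R) (alpha : R)
  (Hu_per : forall eps, 0 < eps < 1 -> forall t, 0 <= t ->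
     periodic2 (fun x y => u eps x y t) /\ periodic2 (fun x y => v eps x y t))
  (Hu_cont : forall eps, 0 < eps < 1 -> cont_Cb (u eps) /\ cont_Cb (v eps))
  (Hu_bd : exists B, forall eps, 0 < eps < 1 -> forall x y t, 0 <= t ->
     Rabs (u eps x y t) <= B /\ Rabs (v eps x y t) <= B)
  (Hr0_Cb : forall eps, 0 < eps < 1 -> Cb (rho0 eps))
  (Hr0_per : forall eps, 0 < eps < 1 -> periodic2 (rho0 eps))
  (Hr0_L1 : exists C, forall eps, 0 < eps < 1 ->
     int_cell (fun x y => Rabs (rho0 eps x y)) <= C)
  (HX : forall eps, 0 < eps < 1 ->
     is_C1_solution eps (u eps) (v eps) (X eps) (rho0 eps))
  (Hphi_smooth : smooth2 phi)
  (Hphi_supp : compact_support2 phi)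
  (Hphi_int : int_R2 phi = 1)
  (Halpha : 0 < alpha <= 1) :
  exists M, 0 < M /\
    forall eps, 0 < eps < 1 -> forall x y t, 0 <= t ->
      Rabs (rho X phi alpha eps x y t) <= M / Rpower eps (2 * alpha) /\
      (exists d, is_derive (fun x' => rho X phi alpha eps x' y t) x d /\
                 Rabs d <= M / Rpower eps (3 * alpha)) /\
      (exists d, is_derive (fun y' => rho X phi alpha eps x y' t) y d /\
                 Rabs d <= M / Rpower eps (3 * alpha)).
Proof.
  destruct Hu_bd as [B HB]. destruct Hr0_L1 as [C HC].
  destruct Hphi_supp as [K HK].
  assert (Hs : supp phi K) by exact HK.
  assert (Hck := Hphi_smooth 2%nat).
  assert (Hck' := Hck). destruct Hck' as [cphi [exx [exy [[cphi1 _] [cphi2 _]]]]].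
  assert (HsA : supp phi (Rabs K)) by (intros a b Hab; apply Hs; pose proof (Rle_abs K); lra).
  destruct (bounded_supp phi _ cphi Hs) as [M0 HM0].
  destruct (bounded_supp (dx phi) _ cphi1 (supp_dx phi (Rabs K) (Rabs_pos K) HsA)) as [M1 HM1].
  destruct (bounded_supp (dy phi) _ cphi2 (supp_dy phi (Rabs K) (Rabs_pos K) HsA)) as [M2 HM2].
  destruct (exists_nat_ge (Rabs K + 2)) as [n Hn].
  set (Mp := Rmax (Rmax M0 M1) (Rmax M2 0)).
  assert (HMp0 : 0 <= Mp) by (unfold Mp; eapply Rle_trans; [|apply Rmax_r]; apply Rmax_r).
  assert (HMp1 : M0 <= Mp /\ M1 <= Mp /\ M2 <= Mp).
  { unfold Mp. repeat split.
    - eapply Rle_trans; [|apply Rmax_l]; apply Rmax_l.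
    - eapply Rle_trans; [|apply Rmax_l]; apply Rmax_r.
    - eapply Rle_trans; [|apply Rmax_r]; apply Rmax_l. }
  set (C' := Rmax C 0).
  set (Nb := INR n * (INR n * C')).
  assert (HNb : 0 <= Nb) by (unfold Nb; pose proof (pos_INR n); assert (0 <= C') by apply Rmax_r; nra).
  exists (Mp * Nb + 1). split. { nra. }
  intros eps Heps x y t Ht.
  assert (Hdl := delta_props eps alpha Heps (proj1 Halpha)).
  set (dl := Rpower eps alpha) in *.
  set (Xt := fun a b => X eps a b t).
  assert (HXe := HX eps Heps).
  assert (cXt : cont2 Xt) by (destruct HXe as [[H _] _]; apply Cb_cont2; apply H; auto).
  destruct (proj1 (proj1 HXe) t Ht) as [_ [BX HBX]].
  assert (HBe : forall x y t, 0 <= t -> Rabs (u eps x y t) <= B /\ Rabs (v eps x y t) <= B) by (intros; apply HB; auto).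
  assert (PXx : forall t, 0 <= t -> forall a b, X eps (a + 2 * PI) (b + 0) t = X eps a b t).
  { apply (X_shift_periodic eps (u eps) (v eps) (X eps) (rho0 eps) B); try lra; auto.
    - intros a b s Hs'. rewrite Rplus_0_r. destruct (Hu_per eps Heps s Hs') as [P1 P2].
      split; [apply (P1 a b)|apply (P2 a b)].
    - intros a b. rewrite Rplus_0_r. apply (Hr0_per eps Heps a b). }
  assert (PXy : forall t, 0 <= t -> forall a b, X eps (a + 0) (b + 2 * PI) t = X eps a b t).
  { apply (X_shift_periodic eps (u eps) (v eps) (X eps) (rho0 eps) B); try lra; auto.
    - intros a b s Hs'. rewrite Rplus_0_r. destruct (Hu_per eps Heps s Hs') as [P1 P2].
      split; [apply (P1 a b)|apply (P2 a b)].
    - intros a b. rewrite Rplus_0_r. apply (Hr0_per eps Heps a b). }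
  assert (PX : forall s, 0 <= s -> per2 (fun a b => X eps a b s)).
  { intros s Hs' a b. split.
    - rewrite <- (PXx s Hs' a b). rewrite Rplus_0_r. reflexivity.
    - rewrite <- (PXy s Hs' a b). rewrite Rplus_0_r. reflexivity. }
  assert (HL1 : dint (fun a b => Rabs (Xt a b)) (- PI) PI (- PI) PI <= C').
  { eapply Rle_trans. apply (L1_bound eps (u eps) (v eps) (X eps) (rho0 eps) B); auto; try lra.
    eapply Rle_trans; [apply (HC eps Heps)|apply Rmax_l]. }
  assert (Hper : per2 Xt) by (apply PX; auto).
  assert (HW0 : 0 <= WW K dl) by (unfold WW; pose proof (R0_pos K dl (proj1 Hdl)); lra).
  assert (HWn : 2 * WW K dl <= 2 * PI * INR n).
  { unfold WW, RR0. pose proof (Rabs_pos K). pose proof PI_RGT_0. pose proof (pos_INR n).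
    assert ((Rabs K + 1) * dl <= Rabs K + 1) by nra.
    assert (INR n <= PI * INR n) by (pose proof PI2_1; nra). lra. }
  assert (Hd2 : Rpower eps (2 * alpha) = dl ^ 2) by apply Rpower_2.
  assert (Hd3 : Rpower eps (3 * alpha) = dl ^ 2 * dl) by apply Rpower_3.
  assert (Hdp : 0 < dl) by lra.
  assert (Hdl2 : 0 < dl ^ 2) by (apply pow_lt; lra).
  split; [|split].
  -
    change (Rabs (conv2 Xt (moll phi dl) x y) <= (Mp * Nb + 1) / Rpower eps (2 * alpha)).
    rewrite (conv_rep phi K dl Xt cphi Hs (proj1 Hdl) cXt x y x y) by (rewrite Rminus_diag, Rabs_R0; lra).
    eapply Rle_trans. apply (weighted_bound Xt n C' cXt Hper HL1 (fun a b => moll phi dl (x - a) (y - b)) (/ (dl ^ 2) * Mp)); auto.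
    + apply cont2_xmin. apply cont2_moll; auto.
    + intros a b. unfold moll. rewrite Rabs_mult, Rabs_inv, (Rabs_right (dl ^ 2)) by lra.
      apply Rmult_le_compat_l. left; apply Rinv_0_lt_compat; lra.
      eapply Rle_trans; [apply HM0|apply HMp1].
    + rewrite Hd2. fold Nb. unfold Rdiv. rewrite (Rmult_comm (Mp * Nb + 1)).
      rewrite Rmult_assoc. apply Rmult_le_compat_l. left; apply Rinv_0_lt_compat; lra. lra.
  - eexists. split.
    + apply (conv_dx phi K dl Xt BX Hck Hs (proj1 Hdl) cXt HBX x y).
    + eapply Rle_trans. apply (weighted_bound Xt n C' cXt Hper HL1 (fun a b => m1 phi dl (x - a) (y - b)) ((/ (dl ^ 2) * / dl) * Mp)); auto.
      * apply cont2_xmin. unfold m1. apply cont2_scaled; auto.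
      * intros a b. unfold m1. rewrite Rabs_mult.
        rewrite (Rabs_right (/ (dl ^ 2) * / dl)).
        2:{ apply Rle_ge. apply Rmult_le_pos; left; apply Rinv_0_lt_compat; lra. }
        apply Rmult_le_compat_l. apply Rmult_le_pos; left; apply Rinv_0_lt_compat; lra.
        eapply Rle_trans; [apply HM1|apply HMp1].
      * rewrite Hd3. fold Nb. unfold Rdiv. rewrite Rinv_mult.
        replace (/ dl ^ 2 * / dl * Mp * Nb) with ((/ dl ^ 2 * / dl) * (Mp * Nb)) by ring.
        rewrite (Rmult_comm (Mp * Nb + 1)). apply Rmult_le_compat_l.
        apply Rmult_le_pos; left; apply Rinv_0_lt_compat; lra. lra.
  - eexists. split.
    + apply (conv_dy phi K dl Xt BX Hck Hs (proj1 Hdl) cXt HBX x y).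
    + eapply Rle_trans. apply (weighted_bound Xt n C' cXt Hper HL1 (fun a b => m2 phi dl (x - a) (y - b)) ((/ (dl ^ 2) * / dl) * Mp)); auto.
      * apply cont2_xmin. unfold m2. apply cont2_scaled; auto.
      * intros a b. unfold m2. rewrite Rabs_mult.
        rewrite (Rabs_right (/ (dl ^ 2) * / dl)).
        2:{ apply Rle_ge. apply Rmult_le_pos; left; apply Rinv_0_lt_compat; lra. }
        apply Rmult_le_compat_l. apply Rmult_le_pos; left; apply Rinv_0_lt_compat; lra.
        eapply Rle_trans; [apply HM2|apply HMp1].
      * rewrite Hd3. fold Nb. unfold Rdiv. rewrite Rinv_mult.
        replace (/ dl ^ 2 * / dl * Mp * Nb) with ((/ dl ^ 2 * / dl) * (Mp * Nb)) by ring.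
        rewrite (Rmult_comm (Mp * Nb + 1)). apply Rmult_le_compat_l.
        apply Rmult_le_pos; left; apply Rinv_0_lt_compat; lra. lra.
Qed.
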